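(* Let $\Gamma$ be a unitarisable group, i.e. every uniformly bounded representation of $\Gamma$ on a Hilbert space is similar (conjugate by a bounded invertible operator) to a unitary representation. Then every unitary representation of $\Gamma$ is strongly rigid.
   Context: For unitary representations $\pi,\omega:\Gamma\to U(\mathcal H)$ put $\|\pi-\omega\|=\sup_\gamma\|\pi(\gamma)-\omega(\gamma)\|$ (operator norm). $\pi$ is rigid if there is $\varepsilon>0$ such that every $\omega\in\mathrm{Hom}(\Gamma,U(\mathcal H))$ with $\|\pi-\omega\|\le\varepsilon$ is unitarily equivalent to $\pi$. $\pi$ is strongly rigid if it is rigid and the orbit map $U(\mathcal H)/Z(\pi)\to\mathrm{Hom}(\Gamma,U(\mathcal H))$, $U\mapsto U\pi U^{-1}$, is a homeomorphism onto its image, where $Z(\pi)=\{u\in U(\mathcal H):u\pi(\gamma)u^{-1}=\pi(\gamma)\ \forall\gamma\}$, $U(\mathcal H)$ carries the norm topology and $\mathrm{Hom}(\Gamma,U(\mathcal H))$ the topology of the uniform distance above. *)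

(* Defs.v *)
From Stdlib Require Import Reals.
Open Scope R_scope.

Record Cx := mkCx { cre : R; cim : R }.
Definition Cadd (a b : Cx) := mkCx (cre a + cre b) (cim a + cim b).
Definition Cmul (a b : Cx) :=
  mkCx (cre a * cre b - cim a * cim b) (cre a * cim b + cim a * cre b).
Definition Cconj (a : Cx) := mkCx (cre a) (- cim a).
Definition C0 := mkCx 0 0.
Definition C1 := mkCx 1 0.

(* inner product linear in the first variable, conjugate-linear in the second *)
Record HilbertSpace := {
  hs :> Type;
  hadd : hs -> hs -> hs;
  hzero : hs;
  hopp : hs -> hs;
  hscal : Cx -> hs -> hs;
  hinner : hs -> hs -> Cx;
  hadd_assoc : forall x y z, hadd x (hadd y z) = hadd (hadd x y) z;
  hadd_comm : forall x y, hadd x y = hadd y x;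
  hadd_0 : forall x, hadd x hzero = x;
  hadd_opp : forall x, hadd x (hopp x) = hzero;
  hscal_1 : forall x, hscal C1 x = x;
  hscal_assoc : forall a b x, hscal a (hscal b x) = hscal (Cmul a b) x;
  hscal_addv : forall a x y, hscal a (hadd x y) = hadd (hscal a x) (hscal a y);
  hscal_adds : forall a b x, hscal (Cadd a b) x = hadd (hscal a x) (hscal b x);
  hinner_addl : forall x y z, hinner (hadd x y) z = Cadd (hinner x z) (hinner y z);
  hinner_scall : forall a x y, hinner (hscal a x) y = Cmul a (hinner x y);
  hinner_conj : forall x y, hinner y x = Cconj (hinner x y);
  hinner_pos : forall x, 0 <= cre (hinner x x);
  hinner_def : forall x, hinner x x = C0 -> x = hzero;
  hcomplete : forall u : nat -> hs,
    (forall eps, eps > 0 -> exists N, forall m n, (N <= m)%nat -> (N <= n)%nat ->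
        sqrt (cre (hinner (hadd (u m) (hopp (u n))) (hadd (u m) (hopp (u n))))) < eps) ->
    exists l, forall eps, eps > 0 -> exists N, forall n, (N <= n)%nat ->
        sqrt (cre (hinner (hadd (u n) (hopp l)) (hadd (u n) (hopp l)))) < eps
}.

Arguments hadd {_}. Arguments hzero {_}. Arguments hopp {_}.
Arguments hscal {_}. Arguments hinner {_}.

Definition hsub {H : HilbertSpace} (x y : H) : H := hadd x (hopp y).
Definition hnorm {H : HilbertSpace} (x : H) : R := sqrt (cre (hinner x x)).

Definition is_linear {H : HilbertSpace} (T : H -> H) : Prop :=
  (forall x y, T (hadd x y) = hadd (T x) (T y)) /\
  (forall a x, T (hscal a x) = hscal a (T x)).

Definition is_bounded {H : HilbertSpace} (T : H -> H) : Prop :=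
  is_linear T /\ exists M, forall x, hnorm (T x) <= M * hnorm x.

Definition opdist_le {H : HilbertSpace} (A B : H -> H) (eps : R) : Prop :=
  forall x, hnorm (hsub (A x) (B x)) <= eps * hnorm x.

Definition is_unitary {H : HilbertSpace} (U : H -> H) : Prop :=
  is_linear U /\ (forall x y, hinner (U x) (U y) = hinner x y) /\
  (forall y, exists x, U x = y).

Record Group := {
  gcar :> Type;
  gmul : gcar -> gcar -> gcar;
  gone : gcar;
  ginv : gcar -> gcar;
  gmul_assoc : forall a b c, gmul a (gmul b c) = gmul (gmul a b) c;
  gmul_1l : forall a, gmul gone a = a;
  gmul_invl : forall a, gmul (ginv a) a = gone
}.
Arguments gmul {_}. Arguments gone {_}. Arguments ginv {_}.

Definition is_hom {G : Group} {H : HilbertSpace} (rho : G -> H -> H) : Prop :=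
  (forall g h x, rho (gmul g h) x = rho g (rho h x)) /\ (forall x, rho gone x = x).

Definition unitary_rep {G : Group} {H : HilbertSpace} (rho : G -> H -> H) : Prop :=
  is_hom rho /\ forall g, is_unitary (rho g).

(* uniformly bounded representation: homomorphism into bounded invertible
   operators with sup_g ||rho g|| < infinity (invertibility follows from is_hom) *)
Definition unif_bounded_rep {G : Group} {H : HilbertSpace} (rho : G -> H -> H) : Prop :=
  is_hom rho /\ (forall g, is_linear (rho g)) /\
  exists M, forall g x, hnorm (rho g x) <= M * hnorm x.

Definition similar_to_unitary {G : Group} {H : HilbertSpace} (rho : G -> H -> H) : Prop :=
  exists S Sinv : H -> H,
    is_bounded S /\ is_bounded Sinv /\
    (forall x, S (Sinv x) = x) /\ (forall x, Sinv (S x) = x) /\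
    forall g, is_unitary (fun x => Sinv (rho g (S x))).

Definition unitarisable (G : Group) : Prop :=
  forall (H : HilbertSpace) (rho : G -> H -> H),
    unif_bounded_rep rho -> similar_to_unitary rho.

Definition unitarily_equivalent {G : Group} {H : HilbertSpace} (pi om : G -> H -> H) : Prop :=
  exists U : H -> H, is_unitary U /\ forall g x, om g (U x) = U (pi g x).

Definition repdist_le {G : Group} {H : HilbertSpace} (pi om : G -> H -> H) (eps : R) : Prop :=
  forall g, opdist_le (pi g) (om g) eps.

Definition rigid {G : Group} {H : HilbertSpace} (pi : G -> H -> H) : Prop :=
  exists eps, eps > 0 /\
    forall om : G -> H -> H, unitary_rep om -> repdist_le pi om eps ->
      unitarily_equivalent pi om.

Definition unitary_pair {H : HilbertSpace} (U U' : H -> H) : Prop :=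
  is_unitary U /\ (forall x, U (U' x) = x) /\ (forall x, U' (U x) = x).

Definition conj_rep {G : Group} {H : HilbertSpace} (U U' : H -> H) (pi : G -> H -> H)
  : G -> H -> H := fun g x => U (pi g (U' x)).

(* The induced map U(H)/Z(pi) -> Hom(Gamma,U(H)) is injective by definition of
   Z(pi).  It is a homeomorphism onto its image iff
   (1) the orbit map U(H) -> Hom is continuous (norm topologies), and
   (2) it is open onto its image for the quotient topology: for every unitary U
       and every norm-neighbourhood {W : ||W - U|| <= eps} of U, there is delta > 0
       such that every orbit point V pi V^-1 within delta of U pi U^-1 is of the
       form W pi W^-1 with ||W - U|| <= eps  (i.e. V is in that ball times Z(pi)). *)
Definition orbit_map_homeo {G : Group} {H : HilbertSpace} (pi : G -> H -> H) : Prop :=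
  (forall U U', unitary_pair U U' ->
     forall eps, eps > 0 -> exists delta, delta > 0 /\
       forall V V', unitary_pair V V' -> opdist_le V U delta ->
         repdist_le (conj_rep V V' pi) (conj_rep U U' pi) eps) /\
  (forall U U', unitary_pair U U' ->
     forall eps, eps > 0 -> exists delta, delta > 0 /\
       forall V V', unitary_pair V V' ->
         repdist_le (conj_rep V V' pi) (conj_rep U U' pi) delta ->
         exists W W', unitary_pair W W' /\ opdist_le W U eps /\
           forall g x, conj_rep W W' pi g x = conj_rep V V' pi g x).

Definition strongly_rigid {G : Group} {H : HilbertSpace} (pi : G -> H -> H) : Prop :=
  rigid pi /\ orbit_map_homeo pi.

(* Main.v *)
Require Import Defs.
From Coquelicot Require Import Hierarchy Series Lim_seq Rbar.
From Stdlib Require Import Reals Lra Psatz ZArith Arith.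
From Stdlib Require Import ClassicalEpsilon FunctionalExtensionality ProofIrrelevance Classical.
Open Scope R_scope.

Arguments hadd_assoc {_}. Arguments hadd_comm {_}. Arguments hadd_0 {_}. Arguments hadd_opp {_}.
Arguments hscal_1 {_}. Arguments hscal_assoc {_}. Arguments hscal_addv {_}. Arguments hscal_adds {_}.
Arguments hinner_addl {_}. Arguments hinner_scall {_}. Arguments hinner_conj {_}. Arguments hinner_pos {_}.
Arguments hinner_def {_}. Arguments hcomplete {_}.
Arguments gmul_assoc {_}. Arguments gmul_1l {_}. Arguments gmul_invl {_}.

Lemma Cx_eq (a b : Cx) : cre a = cre b -> cim a = cim b -> a = b.
Proof. destruct a, b; simpl; intros; subst; reflexivity. Qed.

Ltac cx := apply Cx_eq; simpl; ring.

Definition Creal (r : R) : Cx := mkCx r 0.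
Definition Ci : Cx := mkCx 0 1.

Section Basic.
Context {H : HilbertSpace}.

Definition nsq (x : H) : R := cre (hinner x x).
Definition rin (x y : H) : R := cre (hinner x y).
Definition iin (x y : H) : R := cim (hinner x y).

Lemma hadd_0l (x : H) : hadd hzero x = x.
Proof. rewrite hadd_comm; apply hadd_0. Qed.

Lemma hadd_oppl (x : H) : hadd (hopp x) x = hzero.
Proof. rewrite hadd_comm; apply hadd_opp. Qed.

Lemma hadd_cancel_l (x y z : H) : hadd x y = hadd x z -> y = z.
Proof.
  intros E. rewrite <- (hadd_0l y), <- (hadd_0l z), <- (hadd_oppl x).
  rewrite <- !hadd_assoc, E; reflexivity.
Qed.

Lemma hadd_cancel_r (x y z : H) : hadd y x = hadd z x -> y = z.
Proof. rewrite (hadd_comm y), (hadd_comm z); apply hadd_cancel_l. Qed.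

Lemma hsub_add (x y : H) : hadd (hsub x y) y = x.
Proof. unfold hsub. rewrite <- hadd_assoc, hadd_oppl, hadd_0; reflexivity. Qed.

Lemma hadd_sub (x y : H) : hsub (hadd x y) y = x.
Proof. unfold hsub. rewrite <- hadd_assoc, hadd_opp, hadd_0; reflexivity. Qed.

Lemma hsub_eq0 (x y : H) : hsub x y = hzero -> x = y.
Proof. intros E. rewrite <- (hsub_add x y), E, hadd_0l; reflexivity. Qed.

Lemma hsub_diag (x : H) : hsub x x = hzero.
Proof. apply hadd_opp. Qed.

Lemma hscal_C0 (x : H) : hscal Defs.C0 x = hzero.
Proof.
  apply (hadd_cancel_l (hscal Defs.C0 x)). rewrite hadd_0, <- hscal_adds.
  f_equal. cx.
Qed.

Lemma hscal_zero (a : Cx) : hscal a (@hzero H) = hzero.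
Proof.
  apply (hadd_cancel_l (hscal a hzero)). rewrite hadd_0, <- hscal_addv, hadd_0; reflexivity.
Qed.

Lemma hopp_scal (x : H) : hopp x = hscal (Creal (-1)) x.
Proof.
  apply (hadd_cancel_l x). rewrite hadd_opp.
  rewrite <- (hscal_1 x) at 1. rewrite <- hscal_adds.
  replace (Cadd Defs.C1 (Creal (-1))) with Defs.C0 by cx. symmetry; apply hscal_C0.
Qed.

Lemma hopp_opp (x : H) : hopp (hopp x) = x.
Proof. apply (hadd_cancel_l (hopp x)). rewrite hadd_opp, hadd_oppl; reflexivity. Qed.

Lemma hopp_add (x y : H) : hopp (hadd x y) = hadd (hopp x) (hopp y).
Proof. rewrite !hopp_scal, hscal_addv; reflexivity. Qed.

Lemma hopp_zero : hopp (@hzero H) = hzero.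
Proof. rewrite hopp_scal, hscal_zero; reflexivity. Qed.

Lemma hscal_opp (a : Cx) (x : H) : hscal a (hopp x) = hopp (hscal a x).
Proof. rewrite !hopp_scal, !hscal_assoc. f_equal. cx. Qed.

Lemma hscal_sub (a : Cx) (x y : H) : hscal a (hsub x y) = hsub (hscal a x) (hscal a y).
Proof. unfold hsub. rewrite hscal_addv, hscal_opp; reflexivity. Qed.

Lemma hsub_0r (x : H) : hsub x hzero = x.
Proof. unfold hsub; rewrite hopp_zero, hadd_0; reflexivity. Qed.

Lemma hsub_0l (x : H) : hsub hzero x = hopp x.
Proof. unfold hsub; apply hadd_0l. Qed.

Lemma hopp_sub (x y : H) : hopp (hsub x y) = hsub y x.
Proof. unfold hsub. rewrite hopp_add, hopp_opp, hadd_comm; reflexivity. Qed.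

Lemma hsub_add_add (a b c d : H) : hsub (hadd a b) (hadd c d) = hadd (hsub a c) (hsub b d).
Proof.
  unfold hsub. rewrite hopp_add. rewrite <- !hadd_assoc. f_equal.
  rewrite !hadd_assoc. f_equal. apply hadd_comm.
Qed.

Lemma hsub_sub_sub (a b c : H) : hsub a c = hadd (hsub a b) (hsub b c).
Proof.
  unfold hsub. rewrite <- hadd_assoc, (hadd_assoc (hopp b)), hadd_oppl, hadd_0l. reflexivity.
Qed.

Lemma hinner_0l (y : H) : hinner hzero y = Defs.C0.
Proof.
  rewrite <- (hscal_C0 hzero), hinner_scall. cx.
Qed.

Lemma hinner_0r (y : H) : hinner y hzero = Defs.C0.
Proof. rewrite hinner_conj, hinner_0l. cx. Qed.

Lemma hinner_addr (x y z : H) : hinner x (hadd y z) = Cadd (hinner x y) (hinner x z).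
Proof.
  rewrite hinner_conj, hinner_addl, (hinner_conj y x), (hinner_conj z x).
  destruct (hinner x y), (hinner x z); cx.
Qed.

Lemma hinner_scalr (a : Cx) (x y : H) : hinner x (hscal a y) = Cmul (Cconj a) (hinner x y).
Proof.
  rewrite hinner_conj, hinner_scall, (hinner_conj y x).
  destruct (hinner x y), a; cx.
Qed.

Lemma rin_sym (x y : H) : rin x y = rin y x.
Proof. unfold rin. rewrite (hinner_conj x y). reflexivity. Qed.

Lemma iin_sym (x y : H) : iin x y = - iin y x.
Proof. unfold iin. rewrite (hinner_conj x y). simpl; ring. Qed.

Lemma iin_diag (x : H) : iin x x = 0.
Proof. pose proof (iin_sym x x). lra. Qed.

Lemma rin_addl (x y z : H) : rin (hadd x y) z = rin x z + rin y z.
Proof. unfold rin; rewrite hinner_addl; reflexivity. Qed.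
Lemma rin_addr (x y z : H) : rin z (hadd x y) = rin z x + rin z y.
Proof. unfold rin; rewrite hinner_addr; reflexivity. Qed.
Lemma iin_addl (x y z : H) : iin (hadd x y) z = iin x z + iin y z.
Proof. unfold iin; rewrite hinner_addl; reflexivity. Qed.
Lemma iin_addr (x y z : H) : iin z (hadd x y) = iin z x + iin z y.
Proof. unfold iin; rewrite hinner_addr; reflexivity. Qed.

Lemma rin_scall (a : Cx) (x y : H) : rin (hscal a x) y = cre a * rin x y - cim a * iin x y.
Proof. unfold rin, iin; rewrite hinner_scall; reflexivity. Qed.
Lemma iin_scall (a : Cx) (x y : H) : iin (hscal a x) y = cre a * iin x y + cim a * rin x y.
Proof. unfold rin, iin; rewrite hinner_scall; reflexivity. Qed.
Lemma rin_scalr (a : Cx) (x y : H) : rin x (hscal a y) = cre a * rin x y + cim a * iin x y.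
Proof. unfold rin, iin; rewrite hinner_scalr; simpl; ring. Qed.
Lemma iin_scalr (a : Cx) (x y : H) : iin x (hscal a y) = cre a * iin x y - cim a * rin x y.
Proof. unfold rin, iin; rewrite hinner_scalr; simpl; ring. Qed.

Lemma rin_oppl (x y : H) : rin (hopp x) y = - rin x y.
Proof. rewrite hopp_scal, rin_scall; simpl; ring. Qed.
Lemma rin_oppr (x y : H) : rin y (hopp x) = - rin y x.
Proof. rewrite hopp_scal, rin_scalr; simpl; ring. Qed.
Lemma iin_oppl (x y : H) : iin (hopp x) y = - iin x y.
Proof. rewrite hopp_scal, iin_scall; simpl; ring. Qed.
Lemma iin_oppr (x y : H) : iin y (hopp x) = - iin y x.
Proof. rewrite hopp_scal, iin_scalr; simpl; ring. Qed.
Lemma rin_subl (x y z : H) : rin (hsub x y) z = rin x z - rin y z.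
Proof. unfold hsub; rewrite rin_addl, rin_oppl; ring. Qed.
Lemma rin_subr (x y z : H) : rin z (hsub x y) = rin z x - rin z y.
Proof. unfold hsub; rewrite rin_addr, rin_oppr; ring. Qed.
Lemma iin_subl (x y z : H) : iin (hsub x y) z = iin x z - iin y z.
Proof. unfold hsub; rewrite iin_addl, iin_oppl; ring. Qed.
Lemma iin_subr (x y z : H) : iin z (hsub x y) = iin z x - iin z y.
Proof. unfold hsub; rewrite iin_addr, iin_oppr; ring. Qed.
Lemma rin_0l (y : H) : rin hzero y = 0.
Proof. unfold rin; rewrite hinner_0l; reflexivity. Qed.
Lemma rin_0r (y : H) : rin y hzero = 0.
Proof. unfold rin; rewrite hinner_0r; reflexivity. Qed.
Lemma iin_0l (y : H) : iin hzero y = 0.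
Proof. unfold iin; rewrite hinner_0l; reflexivity. Qed.
Lemma iin_0r (y : H) : iin y hzero = 0.
Proof. unfold iin; rewrite hinner_0r; reflexivity. Qed.

Lemma hinner_eq (x y z w : H) : rin x y = rin z w -> iin x y = iin z w -> hinner x y = hinner z w.
Proof. intros; apply Cx_eq; assumption. Qed.

Lemma nsq_rin (x : H) : nsq x = rin x x.
Proof. reflexivity. Qed.

Lemma nsq_ge0 (x : H) : 0 <= nsq x.
Proof. apply hinner_pos. Qed.

Lemma nsq_eq0 (x : H) : nsq x = 0 -> x = hzero.
Proof.
  intros E. apply hinner_def. apply Cx_eq; [exact E|]. apply iin_diag.
Qed.

Lemma nsq_zero : nsq (@hzero H) = 0.
Proof. unfold nsq. rewrite hinner_0l. reflexivity. Qed.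

Lemma nsq_add (x y : H) : nsq (hadd x y) = nsq x + 2 * rin x y + nsq y.
Proof. rewrite !nsq_rin, rin_addl, !rin_addr, (rin_sym y x). ring. Qed.

Lemma nsq_sub (x y : H) : nsq (hsub x y) = nsq x - 2 * rin x y + nsq y.
Proof. rewrite !nsq_rin, rin_subl, !rin_subr, (rin_sym y x). ring. Qed.

Lemma nsq_scal (a : Cx) (x : H) : nsq (hscal a x) = (cre a * cre a + cim a * cim a) * nsq x.
Proof.
  rewrite !nsq_rin, rin_scall, rin_scalr, iin_scalr, iin_diag. ring.
Qed.

Lemma nsq_opp (x : H) : nsq (hopp x) = nsq x.
Proof. rewrite hopp_scal, nsq_scal; simpl; ring. Qed.

Lemma nsq_sub_sym (x y : H) : nsq (hsub x y) = nsq (hsub y x).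
Proof. rewrite <- hopp_sub, nsq_opp; reflexivity. Qed.

Lemma CS_rin (x y : H) : rin x y * rin x y <= nsq x * nsq y.
Proof.
  destruct (Req_dec (nsq y) 0) as [E|E].
  - apply nsq_eq0 in E; subst y. rewrite rin_0r, nsq_zero. lra.
  - pose proof (nsq_ge0 y). pose proof (nsq_ge0 x).
    set (t := - rin x y / nsq y).
    pose proof (nsq_ge0 (hadd x (hscal (Creal t) y))) as P.
    rewrite nsq_add, nsq_scal, rin_scalr in P. simpl in P.
    unfold t in P. field_simplify in P; [|lra].
    assert (0 <= (nsq x * nsq y - rin x y ^ 2) / nsq y) by lra.
    apply Rmult_le_compat_r with (r := nsq y) in H2; [|lra].
    field_simplify in H2; lra.
Qed.

Lemma nsq_scal_i (x : H) : nsq (hscal Ci x) = nsq x.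
Proof. rewrite nsq_scal; simpl; ring. Qed.

Lemma iin_as_rin (x y : H) : iin x y = - rin (hscal Ci x) y.
Proof. rewrite rin_scall; simpl; ring. Qed.

Lemma CS_iin (x y : H) : iin x y * iin x y <= nsq x * nsq y.
Proof.
  rewrite iin_as_rin. rewrite <- (nsq_scal_i x).
  pose proof (CS_rin (hscal Ci x) y). nra.
Qed.

Lemma hnorm_nsq (x : H) : hnorm x = sqrt (nsq x).
Proof. reflexivity. Qed.

Lemma hnorm_ge0 (x : H) : 0 <= hnorm x.
Proof. apply sqrt_pos. Qed.

Lemma hnorm_sq (x : H) : hnorm x * hnorm x = nsq x.
Proof. apply sqrt_sqrt, nsq_ge0. Qed.

Lemma hnorm_le_iff (x : H) (a : R) : 0 <= a -> (hnorm x <= a <-> nsq x <= a * a).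
Proof.
  intros Ha. pose proof (hnorm_sq x). pose proof (hnorm_ge0 x). split; intros.
  - rewrite <- H0. apply Rmult_le_compat; lra.
  - destruct (Rle_dec (hnorm x) a); [auto|]. nra.
Qed.

Lemma hnorm_zero : hnorm (@hzero H) = 0.
Proof. unfold hnorm. fold (nsq (@hzero H)). rewrite nsq_zero. apply sqrt_0. Qed.

Lemma hnorm_eq0 (x : H) : hnorm x = 0 -> x = hzero.
Proof. intros E. apply nsq_eq0. rewrite <- hnorm_sq, E. ring. Qed.

Lemma hnorm_le0 (x : H) : hnorm x <= 0 -> x = hzero.
Proof. intros E. apply hnorm_eq0. pose proof (hnorm_ge0 x). lra. Qed.

Lemma CS_rin_norm (x y : H) : Rabs (rin x y) <= hnorm x * hnorm y.
Proof.
  pose proof (CS_rin x y). rewrite <- !hnorm_sq in H0.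
  pose proof (hnorm_ge0 x). pose proof (hnorm_ge0 y).
  destruct (Rle_dec (Rabs (rin x y)) (hnorm x * hnorm y)); auto.
  exfalso. apply Rnot_le_lt in n. assert (Rabs (rin x y) * Rabs (rin x y) = rin x y * rin x y).
  { rewrite <- Rabs_mult. apply Rabs_pos_eq. apply Rle_0_sqr. }
  pose proof (Rabs_pos (rin x y)).
  assert (hnorm x * hnorm y * (hnorm x * hnorm y) < Rabs (rin x y) * Rabs (rin x y)).
  { apply Rmult_le_0_lt_compat; try apply Rmult_le_pos; lra. }
  lra.
Qed.

Lemma CS_iin_norm (x y : H) : Rabs (iin x y) <= hnorm x * hnorm y.
Proof.
  pose proof (CS_iin x y). rewrite <- !hnorm_sq in H0.
  pose proof (hnorm_ge0 x). pose proof (hnorm_ge0 y).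
  destruct (Rle_dec (Rabs (iin x y)) (hnorm x * hnorm y)); auto.
  exfalso. apply Rnot_le_lt in n. assert (Rabs (iin x y) * Rabs (iin x y) = iin x y * iin x y).
  { rewrite <- Rabs_mult. apply Rabs_pos_eq. apply Rle_0_sqr. }
  pose proof (Rabs_pos (iin x y)).
  assert (hnorm x * hnorm y * (hnorm x * hnorm y) < Rabs (iin x y) * Rabs (iin x y)).
  { apply Rmult_le_0_lt_compat; try apply Rmult_le_pos; lra. }
  lra.
Qed.

Lemma hnorm_triangle (x y : H) : hnorm (hadd x y) <= hnorm x + hnorm y.
Proof.
  pose proof (hnorm_ge0 x). pose proof (hnorm_ge0 y).
  apply hnorm_le_iff; [lra|]. rewrite nsq_add, <- !hnorm_sq.
  pose proof (CS_rin_norm x y). pose proof (Rle_abs (rin x y)). nra.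
Qed.

Lemma hnorm_scal_real (r : R) (x : H) : hnorm (hscal (Creal r) x) = Rabs r * hnorm x.
Proof.
  unfold hnorm. fold (nsq (hscal (Creal r) x)) (nsq x). rewrite nsq_scal. simpl.
  rewrite Rmult_0_l, Rplus_0_r, sqrt_mult_alt; [| apply Rle_0_sqr].
  f_equal. apply (sqrt_Rsqr_abs r).
Qed.

Lemma hnorm_opp (x : H) : hnorm (hopp x) = hnorm x.
Proof. unfold hnorm. fold (nsq (hopp x)) (nsq x). rewrite nsq_opp; reflexivity. Qed.

Lemma hnorm_sub_sym (x y : H) : hnorm (hsub x y) = hnorm (hsub y x).
Proof. rewrite <- hopp_sub, hnorm_opp; reflexivity. Qed.

Lemma hnorm_sub_triangle (x y z : H) : hnorm (hsub x z) <= hnorm (hsub x y) + hnorm (hsub y z).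
Proof. rewrite (hsub_sub_sub x y z). apply hnorm_triangle. Qed.

Lemma hnorm_sub_le (x y : H) : hnorm (hsub x y) <= hnorm x + hnorm y.
Proof. unfold hsub. rewrite <- (hnorm_opp y). apply hnorm_triangle. Qed.

Lemma hnorm_rev_triangle (x y : H) : hnorm x - hnorm y <= hnorm (hsub x y).
Proof. pose proof (hnorm_triangle (hsub x y) y). rewrite hsub_add in H0. lra. Qed.

Lemma eq_by_rin (x y : H) : (forall z, rin x z = rin y z) -> x = y.
Proof.
  intros E. apply hsub_eq0, nsq_eq0. rewrite nsq_rin, rin_subl, !E.
  ring.
Qed.

Lemma norm_le_by_rin (u : H) (c : R) : 0 <= c -> (forall y, rin u y <= c * hnorm y) -> hnorm u <= c.
Proof.
  intros Hc Hy. specialize (Hy u). rewrite <- nsq_rin, <- hnorm_sq in Hy.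
  pose proof (hnorm_ge0 u).
  destruct (Req_dec (hnorm u) 0); [lra|]. nra.
Qed.

End Basic.

Lemma le_eps (a b : R) : (forall eps, eps > 0 -> a <= b + eps) -> a <= b.
Proof.
  intros Hp. destruct (Rle_dec a b); auto. exfalso.
  specialize (Hp ((a - b)/2)). lra.
Qed.

Section Grp.
Context {G : Group}.
Lemma gmul_invr (a : G) : gmul a (ginv a) = gone.
Proof.
  rewrite <- (gmul_1l (gmul a (ginv a))).
  rewrite <- (gmul_invl (ginv a)) at 1.
  rewrite <- gmul_assoc, (gmul_assoc (ginv a) a), gmul_invl, gmul_1l, gmul_invl.
  reflexivity.
Qed.
Lemma gmul_1r (a : G) : gmul a gone = a.
Proof. rewrite <- (gmul_invl a), gmul_assoc, gmul_invr, gmul_1l; reflexivity. Qed.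
End Grp.

Section Lin.
Context {H : HilbertSpace}.

Lemma lin_zero (T : H -> H) : is_linear T -> T hzero = hzero.
Proof.
  intros [Ha Hs]. replace (@hzero H) with (hscal Defs.C0 (@hzero H)) at 1 by apply hscal_C0.
  rewrite Hs; apply hscal_C0.
Qed.
Lemma lin_opp (T : H -> H) : is_linear T -> forall x, T (hopp x) = hopp (T x).
Proof. intros [Ha Hs] x. rewrite !hopp_scal, Hs; reflexivity. Qed.
Lemma lin_sub (T : H -> H) : is_linear T -> forall x y, T (hsub x y) = hsub (T x) (T y).
Proof. intros L x y. unfold hsub. rewrite (proj1 L), lin_opp; auto. Qed.
Lemma lin_add (T : H -> H) : is_linear T -> forall x y, T (hadd x y) = hadd (T x) (T y).
Proof. intros L; apply (proj1 L). Qed.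
Lemma lin_scal (T : H -> H) : is_linear T -> forall a x, T (hscal a x) = hscal a (T x).
Proof. intros L; apply (proj2 L). Qed.

Lemma lin_id : is_linear (fun x : H => x).
Proof. split; auto. Qed.
Lemma lin_comp (S T : H -> H) : is_linear S -> is_linear T -> is_linear (fun x => S (T x)).
Proof.
  intros LS LT; split; intros.
  - rewrite (lin_add T), (lin_add S); auto.
  - rewrite (lin_scal T), (lin_scal S); auto.
Qed.

Definition opb (T : H -> H) (c : R) := forall x, hnorm (T x) <= c * hnorm x.

Lemma opb_comp (S T : H -> H) a b : 0 <= a -> opb S a -> opb T b -> opb (fun x => S (T x)) (a * b).
Proof.
  intros Ha HS HT x. eapply Rle_trans; [apply HS|]. rewrite Rmult_assoc.
  apply Rmult_le_compat_l; auto.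
Qed.

Lemma unitary_rin (U : H -> H) : is_unitary U -> forall x y, rin (U x) (U y) = rin x y.
Proof. intros [_ [Hi _]] x y. unfold rin. rewrite Hi. reflexivity. Qed.
Lemma unitary_nsq (U : H -> H) : is_unitary U -> forall x, nsq (U x) = nsq x.
Proof. intros Hu x. apply unitary_rin; auto. Qed.
Lemma unitary_norm (U : H -> H) : is_unitary U -> forall x, hnorm (U x) = hnorm x.
Proof. intros Hu x. unfold hnorm. fold (nsq (U x)) (nsq x). rewrite unitary_nsq; auto. Qed.
Lemma unitary_lin (U : H -> H) : is_unitary U -> is_linear U.
Proof. intros [L _]; exact L. Qed.
Lemma unitary_inj (U : H -> H) : is_unitary U -> forall x y, U x = U y -> x = y.
Proof.
  intros Hu x y E. apply hsub_eq0, hnorm_eq0.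
  rewrite <- (unitary_norm U Hu), (lin_sub U (unitary_lin U Hu)), E, hsub_diag, hnorm_zero. reflexivity.
Qed.

Definition conv (u : nat -> H) (l : H) :=
  forall eps, eps > 0 -> exists N, forall n, (N <= n)%nat -> hnorm (hsub (u n) l) < eps.

Definition cauchy (u : nat -> H) :=
  forall eps, eps > 0 -> exists N, forall m n, (N <= m)%nat -> (N <= n)%nat ->
    hnorm (hsub (u m) (u n)) < eps.

Lemma complete_H (u : nat -> H) : cauchy u -> exists l, conv u l.
Proof. intros C. apply (hcomplete u C). Qed.

Lemma conv_unique (u : nat -> H) l1 l2 : conv u l1 -> conv u l2 -> l1 = l2.
Proof.
  intros C1 C2. apply hsub_eq0, hnorm_le0. apply le_eps. intros eps He.
  destruct (C1 (eps/2)) as [N1 HN1]; [lra|]. destruct (C2 (eps/2)) as [N2 HN2]; [lra|].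
  specialize (HN1 (N1+N2)%nat ltac:(lia)). specialize (HN2 (N1+N2)%nat ltac:(lia)).
  pose proof (hnorm_sub_triangle l1 (u (N1+N2)%nat) l2).
  rewrite (hnorm_sub_sym l1 (u _)) in H0. lra.
Qed.

Lemma conv_bound (u : nat -> H) l (c : R) (x : H) :
  conv u l -> (forall n, hnorm (hsub (u n) x) <= c) -> hnorm (hsub l x) <= c.
Proof.
  intros C B. apply le_eps; intros eps He. destruct (C eps He) as [N HN].
  specialize (HN N (le_n _)). specialize (B N).
  pose proof (hnorm_sub_triangle l (u N) x). rewrite hnorm_sub_sym in HN. lra.
Qed.

Lemma conv_norm_bound (u : nat -> H) l (c : R) :
  conv u l -> (forall n, hnorm (u n) <= c) -> hnorm l <= c.
Proof.
  intros C B. pose proof (conv_bound u l c hzero C).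
  rewrite hsub_0r in H0. apply H0. intros n. rewrite hsub_0r. auto.
Qed.

Lemma geom_sum (u : nat -> H) (C q : R) :
  0 <= C -> 0 <= q < 1 -> (forall n, hnorm (hsub (u (S n)) (u n)) <= C * q ^ n) ->
  forall n k, hnorm (hsub (u (n + k)%nat) (u n)) <= C * q ^ n * (1 - q ^ k) / (1 - q).
Proof.
  intros HC Hq Hs n k. induction k.
  - rewrite Nat.add_0_r, hsub_diag, hnorm_zero. simpl. unfold Rdiv. rewrite Rminus_diag, Rmult_0_r, Rmult_0_l. lra.
  - rewrite Nat.add_succ_r. eapply Rle_trans; [apply (hnorm_sub_triangle _ (u (n+k)%nat))|].
    specialize (Hs (n+k)%nat). rewrite pow_add in Hs.
    replace (C * q ^ n * (1 - q ^ S k) / (1 - q)) with (C * (q ^ n * q ^ k) + C * q ^ n * (1 - q ^ k) / (1 - q)).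
    + lra.
    + simpl. field. lra.
Qed.

Lemma geom_limit (u : nat -> H) (C q : R) :
  0 <= C -> 0 <= q < 1 -> (forall n, hnorm (hsub (u (S n)) (u n)) <= C * q ^ n) ->
  exists l, conv u l /\ forall n, hnorm (hsub (u n) l) <= C * q ^ n / (1 - q).
Proof.
  intros HC Hq Hs.
  assert (B : forall n m, (n <= m)%nat -> hnorm (hsub (u m) (u n)) <= C * q ^ n / (1 - q)).
  { intros n m Hnm. replace m with (n + (m - n))%nat by lia.
    eapply Rle_trans; [apply (geom_sum u C q HC Hq Hs)|].
    unfold Rdiv. pose proof (pow_le q (m - n) (proj1 Hq)). pose proof (pow_le q n (proj1 Hq)).
    assert (0 < / (1 - q)) by (apply Rinv_0_lt_compat; lra).
    assert (0 <= C * q ^ n) by (apply Rmult_le_pos; auto).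
    set (d := / (1 - q)) in *. set (a := C * q ^ n) in *. set (p := q ^ (m - n)) in *. assert (0 <= a*p*d) by (apply Rmult_le_pos; [apply Rmult_le_pos|]; lra).
    replace (a * (1 - p) * d) with (a*d - a*p*d) by ring; lra. }
  assert (Cy : cauchy u).
  { intros eps He.
    destruct (pow_lt_1_zero q ltac:(rewrite Rabs_pos_eq; lra) (eps * (1 - q) / (C + 1))) as [N HN].
    { apply Rdiv_lt_0_compat; [apply Rmult_lt_0_compat|]; lra. }
    exists N. intros m n Hm Hn.
    assert (forall k, (N <= k)%nat -> C * q ^ k / (1 - q) < eps).
    { intros k Hk. specialize (HN k Hk). rewrite Rabs_pos_eq in HN by (apply pow_le; lra).
      apply (Rmult_lt_compat_l (C + 1)) in HN; [|lra].
      replace ((C + 1) * (eps * (1 - q) / (C + 1))) with (eps * (1 - q)) in HN by (field; lra).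
      apply (Rmult_lt_reg_r (1 - q)); [lra|]. unfold Rdiv. rewrite Rmult_assoc, Rinv_l, Rmult_1_r by lra.
      pose proof (pow_le q k (proj1 Hq)). nra. }
    destruct (Nat.le_ge_cases n m).
    + eapply Rle_lt_trans; [apply B; auto|]. auto.
    + rewrite hnorm_sub_sym. eapply Rle_lt_trans; [apply B; auto|]. auto. }
  destruct (complete_H u Cy) as [l Hl]. exists l. split; auto.
  intros n. apply le_eps. intros eps He. destruct (Hl eps He) as [N HN].
  specialize (HN (n + N)%nat ltac:(lia)). specialize (B n (n + N)%nat ltac:(lia)).
  pose proof (hnorm_sub_triangle (u n) (u (n + N)%nat) l).
  rewrite hnorm_sub_sym in B. lra.
Qed.

Definition hclosed (P : H -> Prop) := forall u l, (forall n, P (u n)) -> conv u l -> P l.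

Definition hsubspace (P : H -> Prop) :=
  P hzero /\ (forall x y, P x -> P y -> P (hadd x y)) /\ (forall a x, P x -> P (hscal a x)).

End Lin.

Ltac vec := apply eq_by_rin; intro;
  repeat (rewrite ?rin_addl, ?rin_subl, ?rin_scall, ?rin_oppl, ?rin_0l,
                  ?iin_addl, ?iin_subl, ?iin_scall, ?iin_oppl, ?iin_0l); simpl; first [ring | field].

Lemma choice_nat {A : Type} (P : nat -> A -> Prop) : (forall n, exists a, P n a) -> exists f : nat -> A, forall n, P n (f n).
Proof.
  intros Hn. exists (fun n => proj1_sig (constructive_indefinite_description _ (Hn n))).
  intros n. exact (proj2_sig (constructive_indefinite_description _ (Hn n))).
Qed.

Lemma quad_zero (b c : R) : 0 <= c -> (forall t, 0 <= - 2 * t * b + t * t * c) -> b = 0.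
Proof.
  intros Hc Ht. specialize (Ht (b / (c + 1))).
  replace (- 2 * (b / (c + 1)) * b + b / (c + 1) * (b / (c + 1)) * c)
    with (- (b * b) * (c + 2) / ((c + 1) * (c + 1))) in Ht by (field; lra).
  assert (0 < (c + 1) * (c + 1)) by nra.
  apply (Rmult_le_compat_r ((c + 1) * (c + 1))) in Ht; [|lra].
  unfold Rdiv in Ht. rewrite Rmult_assoc, Rinv_l, Rmult_0_l, Rmult_1_r in Ht by lra.
  nra.
Qed.

Lemma nat_large (eps : R) : eps > 0 -> exists N : nat, forall n, (N <= n)%nat -> / (INR n + 1) < eps.
Proof.
  intros He. destruct (archimed (/ eps)) as [A _].
  exists (Z.to_nat (up (/ eps))). intros n Hn.
  assert (INR n + 1 > / eps).
  { apply le_INR in Hn. rewrite INR_IZR_INZ, Z2Nat.id in Hn.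
    - lra.
    - apply le_IZR. pose proof (Rinv_0_lt_compat eps He). lra. }
  rewrite <- (Rinv_inv eps). apply Rinv_lt_contravar; [|lra].
  apply Rmult_lt_0_compat; [apply Rinv_0_lt_compat; lra| pose proof (pos_INR n); lra].
Qed.

Section Proj.
Context {H : HilbertSpace}.

Lemma parallelogram (a b : H) : nsq (hsub a b) + nsq (hadd a b) = 2 * nsq a + 2 * nsq b.
Proof. rewrite nsq_add, nsq_sub. ring. Qed.

Lemma orth_from_min (z m : H) :
  (forall t, nsq z <= nsq (hsub z (hscal (Creal t) m))) -> rin z m = 0.
Proof.
  intros Ht. apply (quad_zero (rin z m) (nsq m) (nsq_ge0 m)). intros t.
  specialize (Ht t). rewrite nsq_sub, nsq_scal, rin_scalr in Ht. simpl in Ht. nra.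
Qed.

Theorem proj_exists (L : H -> Prop) : hsubspace L -> hclosed L ->
  forall x, exists l, L l /\ forall m, L m -> hinner (hsub x l) m = Defs.C0.
Proof.
  intros [L0 [LA LS]] LC x.
  set (E := fun r => exists m, L m /\ r = - nsq (hsub x m)).
  assert (Eb : bound E).
  { exists 0. intros r [m [_ ->]]. pose proof (nsq_ge0 (hsub x m)). lra. }
  assert (Ene : exists r, E r). { exists (- nsq (hsub x hzero)). exists hzero; auto. }
  destruct (completeness E Eb Ene) as [s [Hub Hleast]].
  set (d2 := - s).
  assert (Hd1 : forall m, L m -> d2 <= nsq (hsub x m)).
  { intros m Hm. assert (E (- nsq (hsub x m))) by (exists m; auto). apply Hub in H0. unfold d2; lra. }
  assert (Hd2 : forall eps, eps > 0 -> exists m, L m /\ nsq (hsub x m) < d2 + eps).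
  { intros eps He. apply NNPP. intros Hn.
    assert (is_upper_bound E (s - eps)).
    { intros r [m [Hm ->]]. destruct (Rle_dec (- nsq (hsub x m)) (s - eps)); auto.
      exfalso. apply Hn. exists m. split; auto. unfold d2. lra. }
    apply Hleast in H0. lra. }
  assert (d2ge : 0 <= d2).
  { pose proof (Hd2 1 ltac:(lra)) as [m [Hm _]]. apply Hub in Ene || idtac.
    destruct (Rle_dec 0 d2); auto. exfalso.
    assert (is_upper_bound E 0).
    { intros r [m' [_ ->]]. pose proof (nsq_ge0 (hsub x m')). lra. }
    apply Hleast in H0. unfold d2 in n. lra. }
  destruct (choice_nat (fun n m => L m /\ nsq (hsub x m) < d2 + / (INR n + 1))) as [mm Hmm].
  { intros n. apply Hd2. apply Rinv_0_lt_compat. pose proof (pos_INR n); lra. }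
  assert (mid : forall a b, nsq (hsub (mm a) (mm b)) <= 2 * / (INR a + 1) + 2 * / (INR b + 1)).
  { intros a b. destruct (Hmm a) as [La Ha]. destruct (Hmm b) as [Lb Hb].
    pose proof (parallelogram (hsub x (mm a)) (hsub x (mm b))) as P.
    assert (E1 : hsub (hsub x (mm a)) (hsub x (mm b)) = hsub (mm b) (mm a)) by vec.
    assert (E2 : hadd (hsub x (mm a)) (hsub x (mm b)) =
                 hscal (Creal 2) (hsub x (hscal (Creal (1/2)) (hadd (mm a) (mm b))))) by vec.
    rewrite E1, E2, nsq_scal in P. simpl in P.
    pose proof (Hd1 (hscal (Creal (1/2)) (hadd (mm a) (mm b))) (LS _ _ (LA _ _ La Lb))).
    rewrite nsq_sub_sym. lra. }
  assert (Cy : cauchy mm).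
  { intros eps He. destruct (nat_large (eps * eps / 4)) as [N HN].
    { apply Rdiv_lt_0_compat; [nra|lra]. }
    exists N. intros a b Ha Hb. specialize (mid a b).
    pose proof (HN a Ha). pose proof (HN b Hb).
    assert (nsq (hsub (mm a) (mm b)) < eps * eps) by lra.
    destruct (Rlt_dec (hnorm (hsub (mm a) (mm b))) eps); auto. exfalso.
    rewrite <- hnorm_sq in H2. apply Rnot_lt_le in n. nra. }
  destruct (complete_H mm Cy) as [l Hl].
  assert (Ll : L l) by (apply (LC mm l); auto; intros n; apply Hmm).
  exists l. split; auto.
  assert (Hle : nsq (hsub x l) <= d2).
  { apply le_eps. intros eps He.
    set (K := d2 + 2).
    destruct (nat_large (eps / 3)) as [N1 HN1]; [lra|].
    destruct (Hl (Rmin 1 (eps / (3 * (2 * K + 1))))) as [N2 HN2].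
    { apply Rmin_glb_lt; [lra|]. apply Rdiv_lt_0_compat; [|unfold K]; lra. }
    set (n := (N1 + N2)%nat). specialize (HN1 n ltac:(unfold n; lia)). specialize (HN2 n ltac:(unfold n; lia)).
    destruct (Hmm n) as [_ Hn].
    set (b := hnorm (hsub x (mm n))). set (c := hnorm (hsub (mm n) l)).
    assert (Hb : b * b < d2 + / (INR n + 1)) by (unfold b; rewrite hnorm_sq; auto).
    assert (Hc1 : c < 1) by (pose proof (Rmin_l 1 (eps / (3 * (2 * K + 1)))); unfold c; lra).
    assert (Hc2 : c < eps / (3 * (2 * K + 1))) by (pose proof (Rmin_r 1 (eps / (3 * (2 * K + 1)))); unfold c; lra).
    assert (c0 : 0 <= c) by apply hnorm_ge0. assert (b0 : 0 <= b) by apply hnorm_ge0.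
    assert (bK : b <= K).
    { unfold K. assert (/ (INR n + 1) <= 1).
      { rewrite <- Rinv_1. apply Rinv_le_contravar; [lra|]. pose proof (pos_INR n); lra. }
      nra. }
    pose proof (hnorm_sub_triangle x (mm n) l) as T.
    fold b c in T. pose proof (hnorm_ge0 (hsub x l)).
    rewrite <- hnorm_sq.
    assert (hnorm (hsub x l) * hnorm (hsub x l) <= (b + c) * (b + c)) by nra.
    assert (c * (2 * K + 1) <= eps / 3).
    { apply (Rmult_lt_compat_r (3 * (2 * K + 1))) in Hc2; [|unfold K; lra].
      unfold Rdiv in Hc2. rewrite Rmult_assoc, Rinv_l in Hc2 by (unfold K; lra). nra. }
    nra. }
  intros m Hm. apply Cx_eq; simpl.
  - fold (rin (hsub x l) m). apply orth_from_min. intros t.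
    replace (hsub (hsub x l) (hscal (Creal t) m)) with (hsub x (hadd l (hscal (Creal t) m))) by vec.
    pose proof (Hd1 _ (LA _ _ Ll (LS (Creal t) _ Hm))). lra.
  - fold (iin (hsub x l) m).
    assert (rin (hsub x l) (hscal Ci m) = 0).
    { apply orth_from_min. intros t.
      replace (hsub (hsub x l) (hscal (Creal t) (hscal Ci m))) with (hsub x (hadd l (hscal (Creal t) (hscal Ci m)))) by vec.
      pose proof (Hd1 _ (LA _ _ Ll (LS (Creal t) _ (LS Ci _ Hm)))). lra. }
    rewrite rin_scalr in H0. simpl in H0. lra.
Qed.

End Proj.

Section Proj2.
Context {H : HilbertSpace}.

Definition orth (L : H -> Prop) (z : H) := forall m, L m -> hinner z m = Defs.C0.

Lemma orth_rin (L : H -> Prop) z m : orth L z -> L m -> rin z m = 0.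
Proof. intros O Hm. unfold rin. rewrite (O m Hm). reflexivity. Qed.
Lemma orth_iin (L : H -> Prop) z m : orth L z -> L m -> iin z m = 0.
Proof. intros O Hm. unfold iin. rewrite (O m Hm). reflexivity. Qed.
Lemma orth_intro (L : H -> Prop) z : (forall m, L m -> rin z m = 0 /\ iin z m = 0) -> orth L z.
Proof. intros Hm m Lm. destruct (Hm m Lm). apply Cx_eq; auto. Qed.

Lemma decomp_unique (L : H -> Prop) : hsubspace L -> forall x l1 l2,
  L l1 -> L l2 -> orth L (hsub x l1) -> orth L (hsub x l2) -> l1 = l2.
Proof.
  intros [L0 [LA LS]] x l1 l2 H1 H2 O1 O2.
  assert (Ld : L (hsub l1 l2)).
  { unfold hsub. apply LA; auto. rewrite hopp_scal. apply LS; auto. }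
  apply hsub_eq0, nsq_eq0.
  assert (hsub l1 l2 = hsub (hsub x l2) (hsub x l1)) by vec.
  rewrite nsq_rin. rewrite H0 at 1. rewrite rin_subl.
  rewrite (orth_rin L _ _ O1 Ld), (orth_rin L _ _ O2 Ld). ring.
Qed.

Variable (L : H -> Prop) (LS : hsubspace L) (LC : hclosed L).

Definition pr (x : H) : H := proj1_sig (constructive_indefinite_description _ (proj_exists L LS LC x)).

Lemma pr_in x : L (pr x).
Proof. exact (proj1 (proj2_sig (constructive_indefinite_description _ (proj_exists L LS LC x)))). Qed.
Lemma pr_orth x : orth L (hsub x (pr x)).
Proof. exact (proj2 (proj2_sig (constructive_indefinite_description _ (proj_exists L LS LC x)))). Qed.

Lemma pr_char x l : L l -> orth L (hsub x l) -> pr x = l.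
Proof. intros Hl O. apply (decomp_unique L LS x); auto using pr_in, pr_orth. Qed.

Lemma pr_lin : is_linear pr.
Proof.
  destruct LS as [L0 [LA LSc]]. split.
  - intros x y. apply pr_char; [apply LA; apply pr_in|].
    apply orth_intro. intros m Hm.
    assert (hsub (hadd x y) (hadd (pr x) (pr y)) = hadd (hsub x (pr x)) (hsub y (pr y))) by vec.
    rewrite H0, rin_addl, iin_addl.
    rewrite (orth_rin L _ _ (pr_orth x) Hm), (orth_rin L _ _ (pr_orth y) Hm),
      (orth_iin L _ _ (pr_orth x) Hm), (orth_iin L _ _ (pr_orth y) Hm). split; ring.
  - intros a x. apply pr_char; [apply LSc; apply pr_in|].
    apply orth_intro. intros m Hm.
    assert (hsub (hscal a x) (hscal a (pr x)) = hscal a (hsub x (pr x))) by vec.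
    rewrite H0, rin_scall, iin_scall.
    rewrite (orth_rin L _ _ (pr_orth x) Hm), (orth_iin L _ _ (pr_orth x) Hm). split; ring.
Qed.

Lemma pr_pyth x : nsq x = nsq (pr x) + nsq (hsub x (pr x)).
Proof.
  assert (x = hadd (pr x) (hsub x (pr x))) by vec.
  rewrite H0 at 1. rewrite nsq_add. rewrite rin_sym, (orth_rin L _ _ (pr_orth x) (pr_in x)). ring.
Qed.

Lemma pr_compl_norm x : hnorm (hsub x (pr x)) <= hnorm x.
Proof.
  apply hnorm_le_iff; [apply hnorm_ge0|]. rewrite hnorm_sq, (pr_pyth x).
  pose proof (nsq_ge0 (pr x)). lra.
Qed.

Lemma pr_of_L x : L x -> pr x = x.
Proof. intros Hx. apply pr_char; auto. rewrite hsub_diag. intros m _. apply hinner_0l. Qed.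

End Proj2.

Lemma abs_le0 (x : R) : Rabs x <= 0 + 0 -> x = 0.
Proof. intros Hx. pose proof (Rle_abs x). pose proof (Rle_abs (-x)). rewrite Rabs_Ropp in H0. lra. Qed.

Section Riesz.
Context {H : HilbertSpace}.

Lemma im_bound (phi : H -> Cx) (M : R) :
  (forall a y, phi (hscal a y) = Cmul a (phi y)) ->
  (forall y, Rabs (cre (phi y)) <= M * hnorm y) ->
  forall y, Rabs (cim (phi y)) <= M * hnorm y.
Proof.
  intros Hs Hb y. specialize (Hb (hscal Ci y)). rewrite Hs in Hb. simpl in Hb.
  unfold hnorm in Hb. fold (nsq (hscal Ci y)) in Hb. rewrite nsq_scal_i in Hb.
  replace (0 * cre (phi y) - 1 * cim (phi y)) with (- cim (phi y)) in Hb by ring.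
  rewrite Rabs_Ropp in Hb. exact Hb.
Qed.

Theorem riesz (phi : H -> Cx) (M : R) :
  (forall x y, phi (hadd x y) = Cadd (phi x) (phi y)) ->
  (forall a y, phi (hscal a y) = Cmul a (phi y)) ->
  (forall y, Rabs (cre (phi y)) <= M * hnorm y) ->
  exists z, forall y, phi y = hinner y z.
Proof.
  intros Ha Hs Hb.
  pose proof (im_bound phi M Hs Hb) as Hi.
  assert (phi0 : phi hzero = Defs.C0).
  { rewrite <- (hscal_C0 hzero), Hs. apply Cx_eq; simpl; ring. }
  assert (phisub : forall x y, phi (hsub x y) = mkCx (cre (phi x) - cre (phi y)) (cim (phi x) - cim (phi y))).
  { intros x y. unfold hsub. rewrite Ha, hopp_scal, Hs. apply Cx_eq; simpl; ring. }
  set (K := fun y => phi y = Defs.C0).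
  assert (KS : hsubspace K).
  { split; [|split]; unfold K.
    - exact phi0.
    - intros x y Hx Hy. rewrite Ha, Hx, Hy. apply Cx_eq; simpl; ring.
    - intros a x Hx. rewrite Hs, Hx. apply Cx_eq; simpl; ring. }
  assert (KC : hclosed K).
  { intros u l Hu Hl. unfold K.
    assert (forall n, Rabs (cre (phi l)) <= M * hnorm (hsub l (u n)) /\ Rabs (cim (phi l)) <= M * hnorm (hsub l (u n))).
    { intros n. pose proof (Hb (hsub l (u n))). pose proof (Hi (hsub l (u n))).
      rewrite phisub in H0, H1. simpl in H0, H1. rewrite (Hu n) in H0, H1. simpl in H0, H1.
      rewrite Rminus_0_r in H0, H1. auto. }
    assert (Mpos : forall n, 0 <= M * hnorm (hsub l (u n))).
    { intros n. destruct (H0 n). pose proof (Rabs_pos (cre (phi l))). lra. }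
    assert (Lim : forall eps, eps > 0 -> exists n, M * hnorm (hsub l (u n)) < eps).
    { intros eps He. destruct (Hl (eps / (Rabs M + 1))) as [N HN].
      { apply Rdiv_lt_0_compat; [lra|pose proof (Rabs_pos M); lra]. }
      exists N. specialize (HN N (le_n _)). rewrite hnorm_sub_sym in HN.
      pose proof (Rle_abs M). pose proof (hnorm_ge0 (hsub l (u N))). pose proof (Rabs_pos M).
      apply (Rmult_lt_compat_l (Rabs M + 1)) in HN; [|lra].
      replace ((Rabs M + 1) * (eps / (Rabs M + 1))) with eps in HN by (field; lra). nra. }
    apply Cx_eq; simpl; apply abs_le0; apply le_eps; intros eps He;
      destruct (Lim eps He) as [n Hn]; destruct (H0 n); lra. }
  destruct (classic (forall y, phi y = Defs.C0)) as [Z|NZ].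
  { exists hzero. intros y. rewrite Z, hinner_0r. reflexivity. }
  apply not_all_ex_not in NZ. destruct NZ as [y0 Hy0].
  destruct (proj_exists K KS KC y0) as [l [Kl Ol]].
  set (w := hsub y0 l).
  assert (pw : phi w = phi y0).
  { unfold w. rewrite phisub. unfold K in Kl. rewrite Kl. apply Cx_eq; simpl; ring. }
  assert (nw : nsq w <> 0).
  { intros E. apply nsq_eq0 in E. apply Hy0. rewrite <- pw, E. exact phi0. }
  set (p := phi w). set (n := nsq w).
  exists (hscal (Cmul (Cconj p) (Creal (/ n))) w).
  intros y.
  assert (Kv : K (hsub (hscal p y) (hscal (phi y) w))).
  { unfold K. rewrite phisub, !Hs. fold p. apply Cx_eq; simpl; ring. }
  pose proof (Ol _ Kv) as O. fold w in O.
  assert (O1 : rin w (hsub (hscal p y) (hscal (phi y) w)) = 0) by (unfold rin; rewrite O; reflexivity).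
  assert (O2 : iin w (hsub (hscal p y) (hscal (phi y) w)) = 0) by (unfold iin; rewrite O; reflexivity).
  rewrite rin_subr, !rin_scalr in O1. rewrite iin_subr, !iin_scalr in O2.
  rewrite iin_diag in O1, O2. rewrite <- nsq_rin in O1, O2. fold n in O1, O2.
  rewrite (rin_sym w y), (iin_sym w y) in O1, O2.
  apply Cx_eq.
  - fold (rin y (hscal (Cmul (Cconj p) (Creal (/ n))) w)). rewrite rin_scalr. simpl.
    apply (Rmult_eq_reg_r n); [|exact nw]. field_simplify; [|exact nw]. nra.
  - fold (iin y (hscal (Cmul (Cconj p) (Creal (/ n))) w)). rewrite iin_scalr. simpl.
    apply (Rmult_eq_reg_r n); [|exact nw]. field_simplify; [|exact nw]. nra.
Qed.

End Riesz.

Section Reps.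
Context {G : Group} {H : HilbertSpace}.
Variable rho : G -> H -> H.
Hypothesis Hr : unitary_rep rho.

Lemma rep_inv_l g x : rho (ginv g) (rho g x) = x.
Proof. destruct Hr as [[Hm H1] _]. rewrite <- Hm, gmul_invl, H1; reflexivity. Qed.
Lemma rep_inv_r g x : rho g (rho (ginv g) x) = x.
Proof. destruct Hr as [[Hm H1] _]. rewrite <- Hm, gmul_invr, H1; reflexivity. Qed.
Lemma rep_unit g : is_unitary (rho g).
Proof. apply (proj2 Hr). Qed.
Lemma rep_lin g : is_linear (rho g).
Proof. apply unitary_lin, rep_unit. Qed.
Lemma rep_norm g x : hnorm (rho g x) = hnorm x.
Proof. apply unitary_norm, rep_unit. Qed.
Lemma rep_adj g x y : hinner (rho g x) y = hinner x (rho (ginv g) y).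
Proof.
  rewrite <- (rep_inv_r g y) at 1. destruct (rep_unit g) as [_ [Hi _]]. apply Hi.
Qed.
End Reps.

Section Ops.
Context {H : HilbertSpace}.

Definition opd (S T : H -> H) (d : R) := opb (fun x => hsub (S x) (T x)) d.
Definition sa (S : H -> H) := forall u v, hinner (S u) v = hinner u (S v).
Definition commute (S T : H -> H) := forall x, S (T x) = T (S x).

Lemma opb_nonneg_norm (S : H -> H) c x : opb S c -> 0 <= c -> hnorm (S x) <= c * hnorm x.
Proof. intros Hb _; apply Hb. Qed.

Lemma lin_plus (S T : H -> H) : is_linear S -> is_linear T -> is_linear (fun x => hadd (S x) (T x)).
Proof.
  intros LS LT; split; intros.
  - rewrite (lin_add S), (lin_add T); auto. apply hsub_add_add || idtac.
    apply eq_by_rin; intro z; rewrite !rin_addl; ring.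
  - rewrite (lin_scal S), (lin_scal T), hscal_addv; auto.
Qed.

Lemma lin_rscal (c : Cx) (S : H -> H) : is_linear S -> is_linear (fun x => hscal c (S x)).
Proof.
  intros LS; split; intros.
  - rewrite (lin_add S), hscal_addv; auto.
  - rewrite (lin_scal S), !hscal_assoc; auto. f_equal. destruct a, c; cx.
Qed.

Lemma opb_plus (S T : H -> H) a b : opb S a -> opb T b -> opb (fun x => hadd (S x) (T x)) (a + b).
Proof.
  intros HS HT x. eapply Rle_trans; [apply hnorm_triangle|]. specialize (HS x); specialize (HT x). lra.
Qed.

Lemma opb_rscal (c : R) (S : H -> H) a : opb S a -> opb (fun x => hscal (Creal c) (S x)) (Rabs c * a).
Proof.
  intros HS x. rewrite hnorm_scal_real, Rmult_assoc. apply Rmult_le_compat_l; [apply Rabs_pos|auto].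
Qed.

Lemma opb_mono (S : H -> H) a b : a <= b -> opb S a -> opb S b.
Proof. intros Hab HS x. eapply Rle_trans; [apply HS|]. apply Rmult_le_compat_r; auto. apply hnorm_ge0. Qed.

Lemma opd_comp (S1 S2 T1 T2 : H -> H) a b d1 d2 : is_linear S1 -> 0 <= a -> 0 <= d1 ->
  opb S1 a -> opb T2 b -> opd S1 S2 d1 -> opd T1 T2 d2 ->
  opd (fun x => S1 (T1 x)) (fun x => S2 (T2 x)) (a * d2 + d1 * b).
Proof.
  intros L1 Ha Hd HS HT D1 D2 x.
  assert (hsub (S1 (T1 x)) (S2 (T2 x)) = hadd (S1 (hsub (T1 x) (T2 x))) (hsub (S1 (T2 x)) (S2 (T2 x)))).
  { rewrite (lin_sub S1 L1). vec. }
  rewrite H0. eapply Rle_trans; [apply hnorm_triangle|].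
  pose proof (HS (hsub (T1 x) (T2 x))). pose proof (D2 x). pose proof (D1 (T2 x)). pose proof (HT x).
  assert (a * hnorm (hsub (T1 x) (T2 x)) <= a * (d2 * hnorm x)) by (apply Rmult_le_compat_l; auto).
  assert (d1 * hnorm (T2 x) <= d1 * (b * hnorm x)) by (apply Rmult_le_compat_l; auto).
  nra.
Qed.

End Ops.

Lemma geom_small (K : R) : 0 <= K -> forall eps, eps > 0 -> exists n, K * (1/4) ^ n < eps.
Proof.
  intros HK eps He.
  destruct (pow_lt_1_zero (1/4) ltac:(rewrite Rabs_pos_eq; lra) (eps / (K + 1))) as [N HN].
  { apply Rdiv_lt_0_compat; lra. }
  exists N. specialize (HN N (le_n _)). rewrite Rabs_pos_eq in HN by (apply pow_le; lra).
  apply (Rmult_lt_compat_l (K + 1)) in HN; [|lra].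
  replace ((K + 1) * (eps / (K + 1))) with eps in HN by (field; lra).
  pose proof (pow_le (1/4) N ltac:(lra)). nra.
Qed.

Lemma real_zero_geom (a K : R) : 0 <= K -> (forall n, Rabs a <= K * (1/4) ^ n) -> a = 0.
Proof.
  intros HK Ha. apply abs_le0. apply le_eps. intros eps He.
  destruct (geom_small K HK eps He) as [n Hn]. specialize (Ha n). lra.
Qed.

Section Lims.
Context {H : HilbertSpace}.

Lemma hnorm_scal_le (a : Cx) (v : H) : hnorm (hscal a v) <= (Rabs (cre a) + Rabs (cim a)) * hnorm v.
Proof.
  pose proof (Rabs_pos (cre a)). pose proof (Rabs_pos (cim a)). pose proof (hnorm_ge0 v).
  apply hnorm_le_iff; [nra|]. rewrite nsq_scal, <- hnorm_sq.
  assert (cre a * cre a = Rabs (cre a) * Rabs (cre a)) by (rewrite <- Rabs_mult; symmetry; apply Rabs_pos_eq; apply Rle_0_sqr).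
  assert (cim a * cim a = Rabs (cim a) * Rabs (cim a)) by (rewrite <- Rabs_mult; symmetry; apply Rabs_pos_eq; apply Rle_0_sqr).
  rewrite H3, H4. set (p := Rabs (cre a)) in *. set (q := Rabs (cim a)) in *. set (m := hnorm v) in *.
  assert (0 <= p * q * (m * m)) by (apply Rmult_le_pos; apply Rmult_le_pos; auto).
  replace ((p + q) * m * ((p + q) * m)) with ((p * p + q * q) * (m * m) + 2 * (p * q * (m * m))) by ring.
  lra.
Qed.

Lemma vec_zero_geom (v : H) (K : R) : 0 <= K -> (forall n, hnorm v <= K * (1/4) ^ n) -> v = hzero.
Proof.
  intros HK Hv. apply hnorm_le0. apply le_eps. intros eps He.
  destruct (geom_small K HK eps He) as [n Hn]. specialize (Hv n). lra.
Qed.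

Variables (Sn : nat -> H -> H) (S : H -> H) (K : R).
Hypothesis HK : 0 <= K.
Hypothesis Hconv : forall n, opd (Sn n) S (K * (1/4) ^ n).
Hypothesis Hlin : forall n, is_linear (Sn n).

Let c n := K * (1/4) ^ n.
Lemma c_ge0 n : 0 <= c n.
Proof. unfold c. apply Rmult_le_pos; auto. apply pow_le; lra. Qed.

Lemma lim_lin : is_linear S.
Proof.
  split.
  - intros x y. apply hsub_eq0. apply (vec_zero_geom _ (K * (hnorm (hadd x y) + hnorm x + hnorm y))).
    { pose proof (hnorm_ge0 (hadd x y)). pose proof (hnorm_ge0 x). pose proof (hnorm_ge0 y). nra. }
    intros n.
    assert (hsub (S (hadd x y)) (hadd (S x) (S y)) =
      hadd (hopp (hsub (Sn n (hadd x y)) (S (hadd x y))))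
           (hadd (hsub (Sn n x) (S x)) (hsub (Sn n y) (S y)))).
    { rewrite (lin_add _ (Hlin n)). vec. }
    rewrite H0. eapply Rle_trans; [apply hnorm_triangle|]. rewrite hnorm_opp.
    pose proof (Hconv n (hadd x y)). pose proof (Hconv n x). pose proof (Hconv n y).
    pose proof (hnorm_triangle (hsub (Sn n x) (S x)) (hsub (Sn n y) (S y))). nra.
  - intros a x. apply hsub_eq0.
    set (ka := Rabs (cre a) + Rabs (cim a)).
    assert (0 <= ka) by (unfold ka; pose proof (Rabs_pos (cre a)); pose proof (Rabs_pos (cim a)); lra).
    apply (vec_zero_geom _ (K * (hnorm (hscal a x) + ka * hnorm x))).
    { pose proof (hnorm_ge0 (hscal a x)). pose proof (hnorm_ge0 x).
      apply Rmult_le_pos; [auto|]. apply Rplus_le_le_0_compat; [auto| apply Rmult_le_pos; auto]. }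
    intros n.
    assert (hsub (S (hscal a x)) (hscal a (S x)) =
      hadd (hopp (hsub (Sn n (hscal a x)) (S (hscal a x))))
           (hscal a (hsub (Sn n x) (S x)))).
    { rewrite (lin_scal _ (Hlin n)). vec. }
    rewrite H1. eapply Rle_trans; [apply hnorm_triangle|]. rewrite hnorm_opp.
    pose proof (Hconv n (hscal a x)). pose proof (Hconv n x).
    pose proof (hnorm_scal_le a (hsub (Sn n x) (S x))). fold ka in H4.
    assert (ka * hnorm (hsub (Sn n x) (S x)) <= ka * (K * (1/4)^n * hnorm x)) by (apply Rmult_le_compat_l; auto).
    nra.
Qed.

Lemma lim_opb (r : R) : (forall n, opb (Sn n) r) -> opb S r.
Proof.
  intros Hb x. apply le_eps. intros eps He.
  destruct (geom_small (K * (hnorm x + 1))) with (eps := eps) as [n Hn]; auto.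
  { pose proof (hnorm_ge0 x). nra. }
  pose proof (Hconv n x). pose proof (Hb n x).
  pose proof (hnorm_sub_le (S x) (Sn n x)). rewrite hnorm_sub_sym in H2.
  pose proof (hnorm_triangle (hsub (S x) (Sn n x)) (Sn n x)). rewrite hsub_add in H3.
  rewrite hnorm_sub_sym in H3. pose proof (c_ge0 n). unfold c in H4.
  pose proof (hnorm_ge0 x). nra.
Qed.

Lemma lim_commute (V : H -> H) (v : R) : is_linear V -> 0 <= v -> opb V v ->
  (forall n, commute (Sn n) V) -> commute S V.
Proof.
  intros LV Hv BV Hc x. apply hsub_eq0.
  apply (vec_zero_geom _ (K * (hnorm (V x) + v * hnorm x))).
  { pose proof (hnorm_ge0 (V x)). pose proof (hnorm_ge0 x).
    apply Rmult_le_pos; [auto|]. apply Rplus_le_le_0_compat; [auto| apply Rmult_le_pos; auto]. }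
  intros n.
  assert (hsub (S (V x)) (V (S x)) =
     hadd (hopp (hsub (Sn n (V x)) (S (V x)))) (V (hsub (Sn n x) (S x)))).
  { rewrite (lin_sub V LV), <- (Hc n x). vec. }
  rewrite H0. eapply Rle_trans; [apply hnorm_triangle|]. rewrite hnorm_opp.
  pose proof (Hconv n (V x)). pose proof (Hconv n x). pose proof (BV (hsub (Sn n x) (S x))).
  assert (v * hnorm (hsub (Sn n x) (S x)) <= v * (K * (1/4)^n * hnorm x)) by (apply Rmult_le_compat_l; auto).
  nra.
Qed.

Lemma lim_sa : (forall n, sa (Sn n)) -> sa S.
Proof.
  intros Hs u v.
  assert (Hb : forall n, Rabs (rin (S u) v - rin u (S v)) <= (2 * K * hnorm u * hnorm v) * (1/4)^n
                   /\ Rabs (iin (S u) v - iin u (S v)) <= (2 * K * hnorm u * hnorm v) * (1/4)^n).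
  { intros n.
    assert (E1 : rin (S u) v - rin u (S v) = - rin (hsub (Sn n u) (S u)) v + rin u (hsub (Sn n v) (S v))).
    { rewrite rin_subl, rin_subr. assert (rin (Sn n u) v = rin u (Sn n v)) by (unfold rin; rewrite Hs; reflexivity). lra. }
    assert (E2 : iin (S u) v - iin u (S v) = - iin (hsub (Sn n u) (S u)) v + iin u (hsub (Sn n v) (S v))).
    { rewrite iin_subl, iin_subr. assert (iin (Sn n u) v = iin u (Sn n v)) by (unfold iin; rewrite Hs; reflexivity). lra. }
    pose proof (Hconv n u). pose proof (Hconv n v).
    pose proof (hnorm_ge0 u). pose proof (hnorm_ge0 v).
    pose proof (CS_rin_norm (hsub (Sn n u) (S u)) v). pose proof (CS_rin_norm u (hsub (Sn n v) (S v))).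
    pose proof (CS_iin_norm (hsub (Sn n u) (S u)) v). pose proof (CS_iin_norm u (hsub (Sn n v) (S v))).
    pose proof (c_ge0 n). unfold c in H8.
    assert (hnorm (hsub (Sn n u) (S u)) * hnorm v <= K * (1/4)^n * hnorm u * hnorm v) by (apply Rmult_le_compat_r; auto).
    assert (hnorm u * hnorm (hsub (Sn n v) (S v)) <= hnorm u * (K * (1/4)^n * hnorm v)) by (apply Rmult_le_compat_l; auto).
    rewrite E1, E2. split.
    - eapply Rle_trans; [apply Rabs_triang|]. rewrite Rabs_Ropp. nra.
    - eapply Rle_trans; [apply Rabs_triang|]. rewrite Rabs_Ropp. nra. }
  assert (0 <= 2 * K * hnorm u * hnorm v) by (apply Rmult_le_pos; [apply Rmult_le_pos; [lra| apply hnorm_ge0] | apply hnorm_ge0]).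
  apply Cx_eq.
  - fold (rin (S u) v) (rin u (S v)). apply Rminus_diag_uniq. apply (real_zero_geom _ _ H0). intros n; apply Hb.
  - fold (iin (S u) v) (iin u (S v)). apply Rminus_diag_uniq. apply (real_zero_geom _ _ H0). intros n; apply Hb.
Qed.

End Lims.

Section Isom.
Context {H : HilbertSpace}.

Lemma isometry_surj (W : H -> H) (k : R) : is_linear W -> (forall x y, hinner (W x) (W y) = hinner x y) ->
  k < 1 -> opd W (fun x => x) k -> forall y, exists x, W x = y.
Proof.
  intros LW IW Hk DW.
  assert (NW : forall x, hnorm (W x) = hnorm x).
  { intros x. unfold hnorm. rewrite IW. reflexivity. }
  set (Rg := fun v => exists x, W x = v).
  assert (RS : hsubspace Rg).
  { split; [|split].
    - exists hzero. apply lin_zero; auto.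
    - intros a b [x Hx] [y Hy]. exists (hadd x y). rewrite (lin_add W LW), Hx, Hy. reflexivity.
    - intros a b [x Hx]. exists (hscal a x). rewrite (lin_scal W LW), Hx. reflexivity. }
  assert (RC : hclosed Rg).
  { intros u l Hu Hl. destruct (choice_nat (fun n x => W x = u n)) as [xs Hxs]; [apply Hu|].
    assert (Cy : cauchy xs).
    { intros eps He.
      destruct (Hl (eps/2)) as [N HN]; [lra|]. exists N. intros m n Hm Hn.
      rewrite <- NW, (lin_sub W LW), !Hxs.
      pose proof (HN m Hm). pose proof (HN n Hn). pose proof (hnorm_sub_triangle (u m) l (u n)).
      rewrite (hnorm_sub_sym l) in H2. lra. }
    destruct (complete_H xs Cy) as [x Hx]. exists x.
    apply (conv_unique u); auto. intros eps He. destruct (Hx eps He) as [N HN]. exists N. intros n Hn.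
    rewrite <- Hxs, <- (lin_sub W LW), NW. auto. }
  intros y. destruct (proj_exists Rg RS RC y) as [l [Rl Ol]].
  set (w := hsub y l).
  assert (Rw : Rg (W w)) by (exists w; reflexivity).
  pose proof (Ol _ Rw) as O'. fold w in O'.
  assert (O : rin w (W w) = 0) by (unfold rin; rewrite O'; reflexivity).
  assert (w = hzero).
  { apply nsq_eq0. rewrite nsq_rin.
    assert (rin w w = rin w (hsub w (W w))) by (rewrite rin_subr, O; ring).
    pose proof (CS_rin_norm w (hsub w (W w))). pose proof (DW w). cbv beta in H2. rewrite hnorm_sub_sym in H2.
    pose proof (hnorm_ge0 w). pose proof (Rle_abs (rin w (hsub w (W w)))).
    assert (hnorm w * hnorm (hsub w (W w)) <= hnorm w * (k * hnorm w)) by (apply Rmult_le_compat_l; auto).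
    rewrite <- nsq_rin, <- hnorm_sq in H0. pose proof (nsq_ge0 w). rewrite <- nsq_rin in H0 || idtac.
    rewrite <- nsq_rin, <- hnorm_sq. assert (0 <= hnorm w * hnorm w) by (apply Rmult_le_pos; auto). nra. }
  destruct Rl as [x Hx]. exists x. rewrite Hx. symmetry. apply hsub_eq0. exact H0.
Qed.

End Isom.

Lemma exs_le_abs (a b : nat -> R) : (forall n, Rabs (a n) <= b n) -> ex_series b -> ex_series a.
Proof. intros Hab Hb. apply (ex_series_le a b); auto. Qed.

Lemma exs_plus (a b : nat -> R) : ex_series a -> ex_series b -> ex_series (fun n => a n + b n).
Proof. intros Ha Hb. exact (ex_series_plus a b Ha Hb). Qed.

Lemma exs_scal (c : R) (a : nat -> R) : ex_series a -> ex_series (fun n => c * a n).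
Proof. intros Ha. exact (ex_series_scal_l c a Ha). Qed.

Lemma exs_ext (a b : nat -> R) : (forall n, a n = b n) -> ex_series a -> ex_series b.
Proof. apply ex_series_ext. Qed.

Lemma Ser_zero : Series (fun _ => 0) = 0.
Proof.
  rewrite (Series_ext _ (fun n => 0 * 0)) by (intros; ring). rewrite Series_scal_l. ring.
Qed.

Lemma sum_incr (a : nat -> R) : (forall n, 0 <= a n) -> forall n, sum_f_R0 a n <= sum_f_R0 a (S n).
Proof. intros Ha n. simpl. specialize (Ha (S n)). lra. Qed.

Lemma ser_partial_le (a : nat -> R) : (forall n, 0 <= a n) -> ex_series a ->
  forall N, sum_f_R0 a N <= Series a.
Proof.
  intros Ha Hs N. pose proof (Series_correct a Hs) as C.
  apply is_series_Reals in C. unfold infinite_sum in C.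
  assert (Un_cv (sum_f_R0 a) (Series a)) by exact C.
  apply is_lim_seq_Reals in H.
  apply (is_lim_seq_incr_compare (sum_f_R0 a) (Series a) H (sum_incr a Ha)).
Qed.

Lemma term_le_ser (a : nat -> R) : (forall n, 0 <= a n) -> ex_series a -> forall n, a n <= Series a.
Proof.
  intros Ha Hs n. eapply Rle_trans; [|apply (ser_partial_le a Ha Hs n)].
  destruct n; simpl; [lra|]. pose proof (cond_pos_sum a n (fun k => Ha k)). lra.
Qed.

Lemma ser_nonneg (a : nat -> R) : (forall n, 0 <= a n) -> ex_series a -> 0 <= Series a.
Proof. intros Ha Hs. pose proof (term_le_ser a Ha Hs 0). specialize (Ha 0%nat). lra. Qed.

Lemma ser_bound (a : nat -> R) (B : R) : (forall n, 0 <= a n) -> (forall N, sum_f_R0 a N <= B) ->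
  ex_series a /\ Series a <= B.
Proof.
  intros Ha Hb.
  destruct (ex_finite_lim_seq_incr (sum_f_R0 a) B (sum_incr a Ha) Hb) as [l Hl].
  assert (is_series a l).
  { apply is_series_Reals. apply is_lim_seq_Reals in Hl. exact Hl. }
  split; [exists l; auto|]. rewrite (is_series_unique a l H).
  pose proof (is_lim_seq_le (sum_f_R0 a) (fun _ => B) l B Hb Hl (is_lim_seq_const B)). simpl in H0. exact H0.
Qed.

Lemma ser_zero_terms (a : nat -> R) : (forall n, 0 <= a n) -> ex_series a -> Series a = 0 -> forall n, a n = 0.
Proof. intros Ha Hs H0 n. pose proof (term_le_ser a Ha Hs n). specialize (Ha n). lra. Qed.

Lemma exs_shift (a : nat -> R) : ex_series a -> ex_series (fun k => a (S k)).
Proof. intros Ha. apply (proj1 (ex_series_incr_1 a)). exact Ha. Qed.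

Lemma ser_shift_le (a : nat -> R) : (forall n, 0 <= a n) -> ex_series a -> Series (fun k => a (S k)) <= Series a.
Proof. intros Ha Hs. rewrite (Series_incr_1 a Hs). specialize (Ha 0%nat). lra. Qed.

Lemma sqrt_lt_sq (x eps : R) : 0 <= x -> sqrt x < eps -> x < eps * eps.
Proof.
  intros Hx Hs. pose proof (sqrt_pos x). rewrite <- (sqrt_sqrt x Hx).
  apply Rmult_le_0_lt_compat; lra.
Qed.

Lemma sqrt_le_sq (x a : R) : 0 <= a -> x <= a * a -> sqrt x <= a.
Proof.
  intros Ha Hx. rewrite <- (sqrt_square a Ha). apply sqrt_le_1_alt. exact Hx.
Qed.

Section L2.
Context {X : HilbertSpace}.

Lemma nsq_add_le (a b : X) : nsq (hadd a b) <= 2 * nsq a + 2 * nsq b.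
Proof. pose proof (parallelogram a b). pose proof (nsq_ge0 (hsub a b)). lra. Qed.

Lemma abs_rin_le (a b : X) : Rabs (rin a b) <= / 2 * (nsq a + nsq b).
Proof.
  eapply Rle_trans; [apply CS_rin_norm|]. rewrite <- !hnorm_sq.
  pose proof (Rle_0_sqr (hnorm a - hnorm b)). unfold Rsqr in H. lra.
Qed.
Lemma abs_iin_le (a b : X) : Rabs (iin a b) <= / 2 * (nsq a + nsq b).
Proof.
  eapply Rle_trans; [apply CS_iin_norm|]. rewrite <- !hnorm_sq.
  pose proof (Rle_0_sqr (hnorm a - hnorm b)). unfold Rsqr in H. lra.
Qed.

Definition l2pred (u : nat -> X) := ex_series (fun n => nsq (u n)).
Definition L2T := {u : nat -> X | l2pred u}.

Definition sq (u : L2T) : nat -> X := proj1_sig u.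

Lemma l2_eq (u v : L2T) : (forall n, sq u n = sq v n) -> u = v.
Proof.
  destruct u as [u pu], v as [v pv]. unfold sq; simpl. intros E.
  assert (u = v) by (apply functional_extensionality; exact E). subst v.
  f_equal. apply proof_irrelevance.
Qed.

Lemma exs_zero : ex_series (fun _ : nat => 0).
Proof.
  apply (ser_bound (fun _ => 0) 0); [intros; lra|]. intros N. rewrite sum_cte. lra.
Qed.

Lemma l2pred_add u v : l2pred u -> l2pred v -> l2pred (fun n => hadd (u n) (v n)).
Proof.
  intros Hu Hv. unfold l2pred. apply (exs_le_abs _ (fun n => 2 * nsq (u n) + 2 * nsq (v n))).
  - intros n. rewrite Rabs_pos_eq by apply nsq_ge0. apply nsq_add_le.
  - apply exs_plus; apply exs_scal; auto.
Qed.

Lemma l2pred_zero : l2pred (fun _ => hzero).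
Proof. unfold l2pred. apply (exs_ext (fun _ => 0)); [intros; rewrite nsq_zero; reflexivity|apply exs_zero]. Qed.

Lemma l2pred_opp u : l2pred u -> l2pred (fun n => hopp (u n)).
Proof. intros Hu. unfold l2pred. apply (exs_ext (fun n => nsq (u n))); auto. intros n; rewrite nsq_opp; auto. Qed.

Lemma l2pred_scal a u : l2pred u -> l2pred (fun n => hscal a (u n)).
Proof.
  intros Hu. unfold l2pred. apply (exs_ext (fun n => (cre a * cre a + cim a * cim a) * nsq (u n))).
  - intros n; rewrite nsq_scal; auto.
  - apply exs_scal; auto.
Qed.

Definition l2add (u v : L2T) : L2T := exist _ _ (l2pred_add _ _ (proj2_sig u) (proj2_sig v)).
Definition l2zero : L2T := exist _ _ l2pred_zero.
Definition l2opp (u : L2T) : L2T := exist _ _ (l2pred_opp _ (proj2_sig u)).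
Definition l2scal (a : Cx) (u : L2T) : L2T := exist _ _ (l2pred_scal a _ (proj2_sig u)).
Definition l2inner (u v : L2T) : Cx :=
  mkCx (Series (fun n => rin (sq u n) (sq v n))) (Series (fun n => iin (sq u n) (sq v n))).

Lemma ex_rin (u v : L2T) : ex_series (fun n => rin (sq u n) (sq v n)).
Proof.
  apply (exs_le_abs _ (fun n => / 2 * (nsq (sq u n) + nsq (sq v n)))).
  - intros n; apply abs_rin_le.
  - apply exs_scal, exs_plus; [apply (proj2_sig u)|apply (proj2_sig v)].
Qed.
Lemma ex_iin (u v : L2T) : ex_series (fun n => iin (sq u n) (sq v n)).
Proof.
  apply (exs_le_abs _ (fun n => / 2 * (nsq (sq u n) + nsq (sq v n)))).
  - intros n; apply abs_iin_le.
  - apply exs_scal, exs_plus; [apply (proj2_sig u)|apply (proj2_sig v)].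
Qed.

Lemma ex_nsq (u : L2T) : ex_series (fun n => nsq (sq u n)).
Proof. apply (proj2_sig u). Qed.

Lemma l2_add_assoc x y z : l2add x (l2add y z) = l2add (l2add x y) z.
Proof. apply l2_eq; intros n; simpl. apply hadd_assoc. Qed.
Lemma l2_add_comm x y : l2add x y = l2add y x.
Proof. apply l2_eq; intros n; simpl. apply hadd_comm. Qed.
Lemma l2_add_0 x : l2add x l2zero = x.
Proof. apply l2_eq; intros n; simpl. apply hadd_0. Qed.
Lemma l2_add_opp x : l2add x (l2opp x) = l2zero.
Proof. apply l2_eq; intros n; simpl. apply hadd_opp. Qed.
Lemma l2_scal_1 x : l2scal Defs.C1 x = x.
Proof. apply l2_eq; intros n; simpl. apply hscal_1. Qed.
Lemma l2_scal_assoc a b x : l2scal a (l2scal b x) = l2scal (Cmul a b) x.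
Proof. apply l2_eq; intros n; simpl. apply hscal_assoc. Qed.
Lemma l2_scal_addv a x y : l2scal a (l2add x y) = l2add (l2scal a x) (l2scal a y).
Proof. apply l2_eq; intros n; simpl. apply hscal_addv. Qed.
Lemma l2_scal_adds a b x : l2scal (Cadd a b) x = l2add (l2scal a x) (l2scal b x).
Proof. apply l2_eq; intros n; simpl. apply hscal_adds. Qed.

Lemma l2_inner_addl x y z : l2inner (l2add x y) z = Cadd (l2inner x z) (l2inner y z).
Proof.
  unfold l2inner, Cadd; simpl. f_equal.
  - rewrite <- Series_plus by apply ex_rin. apply Series_ext. intros n. apply rin_addl.
  - rewrite <- Series_plus by apply ex_iin. apply Series_ext. intros n. apply iin_addl.
Qed.

Lemma l2_inner_scall a x y : l2inner (l2scal a x) y = Cmul a (l2inner x y).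
Proof.
  unfold l2inner, Cmul; simpl. f_equal.
  - rewrite <- !Series_scal_l, <- Series_minus by (apply exs_scal; first [apply ex_rin|apply ex_iin]).
    apply Series_ext. intros n. apply rin_scall.
  - rewrite <- !Series_scal_l, <- Series_plus by (apply exs_scal; first [apply ex_rin|apply ex_iin]).
    apply Series_ext. intros n. apply iin_scall.
Qed.

Lemma l2_inner_conj x y : l2inner y x = Cconj (l2inner x y).
Proof.
  unfold l2inner, Cconj; simpl. f_equal.
  - apply Series_ext. intros n. apply rin_sym.
  - rewrite <- Series_opp. apply Series_ext. intros n. apply iin_sym.
Qed.

Lemma l2_inner_pos x : 0 <= cre (l2inner x x).
Proof. simpl. apply ser_nonneg; [intros; apply nsq_ge0|apply ex_nsq]. Qed.

Lemma l2_inner_def x : l2inner x x = Defs.C0 -> x = l2zero.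
Proof.
  intros E. apply (f_equal cre) in E. simpl in E.
  apply l2_eq. intros n. simpl. apply nsq_eq0.
  apply (ser_zero_terms (fun n => nsq (sq x n))); auto; [intros; apply nsq_ge0|apply ex_nsq].
Qed.

Definition l2nsq (w : L2T) := Series (fun k => nsq (sq w k)).

Lemma coord_le (w : L2T) k : nsq (sq w k) <= l2nsq w.
Proof. apply (term_le_ser (fun k => nsq (sq w k))); [intros; apply nsq_ge0|apply ex_nsq]. Qed.

Lemma fin_unif (f : nat -> nat -> X) (l : nat -> X) :
  (forall k, conv (fun j => f j k) (l k)) ->
  forall d, d > 0 -> forall M, exists J, forall j, (J <= j)%nat -> forall k, (k <= M)%nat -> hnorm (hsub (f j k) (l k)) < d.
Proof.
  intros Hc d Hd M. induction M.
  - destruct (Hc 0%nat d Hd) as [J HJ]. exists J. intros j Hj k Hk. replace k with 0%nat by lia. auto.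
  - destruct IHM as [J1 H1]. destruct (Hc (S M) d Hd) as [J2 H2]. exists (J1 + J2)%nat.
    intros j Hj k Hk. destruct (Nat.eq_dec k (S M)).
    + subst. apply H2. lia.
    + apply H1; lia.
Qed.

Lemma l2_complete (u : nat -> L2T) :
  (forall eps, eps > 0 -> exists N, forall m n, (N <= m)%nat -> (N <= n)%nat ->
     sqrt (cre (l2inner (l2add (u m) (l2opp (u n))) (l2add (u m) (l2opp (u n))))) < eps) ->
  exists l, forall eps, eps > 0 -> exists N, forall n, (N <= n)%nat ->
     sqrt (cre (l2inner (l2add (u n) (l2opp l)) (l2add (u n) (l2opp l)))) < eps.
Proof.
  intros Cy.
  set (U := fun m k => sq (u m) k).
  assert (EQ : forall a b, cre (l2inner (l2add a (l2opp b)) (l2add a (l2opp b))) = l2nsq (l2add a (l2opp b))).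
  { intros; reflexivity. }
  assert (Dsq : forall a b k, sq (l2add a (l2opp b)) k = hsub (sq a k) (sq b k)) by (intros; reflexivity).
  assert (Ck : forall k, cauchy (fun m => U m k)).
  { intros k eps He. destruct (Cy eps He) as [N HN]. exists N. intros m n Hm Hn.
    specialize (HN m n Hm Hn). rewrite EQ in HN. eapply Rle_lt_trans; [|exact HN].
    unfold hnorm. apply sqrt_le_1_alt. pose proof (coord_le (l2add (u m) (l2opp (u n))) k).
    rewrite Dsq in H. exact H. }
  destruct (choice_nat (fun k x => conv (fun m => U m k) x)) as [l Hl].
  { intros k. apply complete_H, Ck. }
  assert (Key : forall eps, eps > 0 -> exists N, forall m, (N <= m)%nat -> forall M,
             sum_f_R0 (fun k => nsq (hsub (U m k) (l k))) M <= 4 * (eps * eps)).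
  { intros eps He. destruct (Cy eps He) as [N HN]. exists N. intros m Hm M.
    destruct (fin_unif U l Hl (eps / (INR M + 1))) with (M := M) as [J HJ].
    { apply Rdiv_lt_0_compat; [lra|pose proof (pos_INR M); lra]. }
    set (j := (N + J)%nat).
    specialize (HN m j Hm ltac:(unfold j; lia)). rewrite EQ in HN.
    apply sqrt_lt_sq in HN; [|apply ser_nonneg; [intros; apply nsq_ge0|apply ex_nsq]].
    eapply Rle_trans.
    { apply (sum_Rle _ (fun k => 2 * nsq (hsub (U m k) (U j k)) + 2 * (eps / (INR M + 1) * (eps / (INR M + 1))))).
      intros k Hk. rewrite (hsub_sub_sub (U m k) (U j k) (l k)).
      eapply Rle_trans; [apply nsq_add_le|]. apply Rplus_le_compat_l. apply Rmult_le_compat_l; [lra|].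
      specialize (HJ j ltac:(unfold j; lia) k Hk). rewrite <- hnorm_sq.
      pose proof (hnorm_ge0 (hsub (U j k) (l k))). apply Rmult_le_compat; lra. }
    rewrite plus_sum, sum_cte.
    assert (S1 : sum_f_R0 (fun k => 2 * nsq (hsub (U m k) (U j k))) M <= 2 * l2nsq (l2add (u m) (l2opp (u j)))).
    { rewrite (sum_eq _ (fun k => nsq (hsub (U m k) (U j k)) * 2)) by (intros; ring).
      rewrite <- scal_sum. apply Rmult_le_compat_l; [lra|].
      unfold l2nsq. apply (ser_partial_le (fun k => nsq (sq (l2add (u m) (l2opp (u j))) k))); [intros; apply nsq_ge0|apply ex_nsq]. }
    assert (S2 : 2 * (eps / (INR M + 1) * (eps / (INR M + 1))) * INR (S M) <= 2 * (eps * eps)).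
    { rewrite S_INR. pose proof (pos_INR M).
      replace (2 * (eps / (INR M + 1) * (eps / (INR M + 1))) * (INR M + 1)) with (2 * (eps * eps) / (INR M + 1)) by (field; lra).
      apply (Rmult_le_reg_r (INR M + 1)); [lra|]. unfold Rdiv. rewrite Rmult_assoc, Rinv_l, Rmult_1_r by lra.
      assert (0 <= eps * eps) by nra. nra. }
    unfold l2nsq in HN. fold (l2nsq (l2add (u m) (l2opp (u j)))) in HN. lra. }
  assert (Pl : l2pred l).
  { destruct (Key 1 ltac:(lra)) as [N HN].
    destruct (ser_bound (fun k => nsq (hsub (U N k) (l k))) (4 * (1 * 1))) as [Ex _].
    { intros; apply nsq_ge0. }
    { apply HN. lia. }
    unfold l2pred. apply (exs_le_abs _ (fun k => 2 * nsq (U N k) + 2 * nsq (hsub (U N k) (l k)))).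
    - intros k. rewrite Rabs_pos_eq by apply nsq_ge0.
      replace (l k) with (hadd (U N k) (hopp (hsub (U N k) (l k)))) at 1 by vec.
      eapply Rle_trans; [apply nsq_add_le|]. rewrite nsq_opp. lra.
    - apply exs_plus; apply exs_scal; auto. apply (proj2_sig (u N)). }
  exists (exist _ l Pl). intros eps He.
  destruct (Key (eps / 3)) as [N HN]; [lra|]. exists N. intros n Hn.
  rewrite EQ. unfold l2nsq.
  destruct (ser_bound (fun k => nsq (hsub (U n k) (l k))) (4 * (eps / 3 * (eps / 3)))) as [_ Hs].
  { intros; apply nsq_ge0. }
  { apply HN; auto. }
  eapply Rle_lt_trans; [apply (sqrt_le_sq _ (2 * (eps / 3))); [lra|]|lra].
  replace (2 * (eps / 3) * (2 * (eps / 3))) with (4 * (eps / 3 * (eps / 3))) by ring. exact Hs.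
Qed.

Definition l2space : HilbertSpace :=
  Build_HilbertSpace L2T l2add l2zero l2opp l2scal l2inner
    l2_add_assoc l2_add_comm l2_add_0 l2_add_opp l2_scal_1 l2_scal_assoc l2_scal_addv l2_scal_adds
    l2_inner_addl l2_inner_scall l2_inner_conj l2_inner_pos l2_inner_def l2_complete.

End L2.

Section OpsMore.
Context {H : HilbertSpace}.

Lemma eq_by_rin_r (x y : H) : (forall z, rin z x = rin z y) -> x = y.
Proof. intros E. apply eq_by_rin. intros z. rewrite (rin_sym x), (rin_sym y). auto. Qed.

Lemma sa_plus (S T : H -> H) : sa S -> sa T -> sa (fun x => hadd (S x) (T x)).
Proof. intros HS HT u v. rewrite hinner_addl, hinner_addr, HS, HT. reflexivity. Qed.
Lemma sa_rscal (c : R) (S : H -> H) : sa S -> sa (fun x => hscal (Creal c) (S x)).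
Proof. intros HS u v. rewrite hinner_scall, hinner_scalr, HS. f_equal. cx. Qed.
Lemma sa_comp (S T : H -> H) : sa S -> sa T -> commute S T -> sa (fun x => S (T x)).
Proof. intros HS HT C u v. rewrite HS, HT, C. reflexivity. Qed.
Lemma sa_id : sa (fun x : H => x).
Proof. intros u v; reflexivity. Qed.

Lemma opb_id : opb (fun x : H => x) 1.
Proof. intros x; lra. Qed.

Lemma opb_comp' (S T : H -> H) a b : 0 <= a -> opb S a -> opb T b -> opb (fun x => S (T x)) (a * b).
Proof. apply opb_comp. Qed.

End OpsMore.

Section Polar.
Context {G : Group} {H : HilbertSpace}.
Variables (pi om : G -> H -> H).
Hypotheses (Hpi : unitary_rep pi) (Hom : unitary_rep om).
Variables (t : R) (T : H -> H).
Hypotheses (Ht0 : 0 <= t) (Ht1 : t <= 1/64) (LT : is_linear T) (BT : opb T t)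
  (Hrel : forall g y, hsub (pi g y) (om g y) = hsub (pi g (T y)) (T (om g y))).

Definition Aop (x : H) : H := hsub x (T x).

Lemma LA : is_linear Aop.
Proof.
  unfold Aop; split; intros.
  - rewrite (lin_add T LT). vec.
  - rewrite (lin_scal T LT). vec.
Qed.

Lemma BA : opb Aop (1 + t).
Proof. intros x. unfold Aop. eapply Rle_trans; [apply hnorm_sub_le|]. pose proof (BT x). lra. Qed.

Lemma Aint g y : pi g (Aop y) = Aop (om g y).
Proof.
  unfold Aop. rewrite (lin_sub _ (rep_lin pi Hpi g)). apply eq_by_rin; intro z.
  pose proof (f_equal (fun v => rin v z) (Hrel g y)). simpl in H0.
  rewrite !rin_subl in *. lra.
Qed.

Lemma Bex x : exists z, forall y, hinner (Aop y) (Aop x) = hinner y z.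
Proof.
  apply (riesz (fun y => hinner (Aop y) (Aop x)) ((1 + t) * ((1 + t) * hnorm x))).
  - intros a b. rewrite (lin_add _ LA). apply hinner_addl.
  - intros a y. rewrite (lin_scal _ LA). apply hinner_scall.
  - intros y. fold (rin (Aop y) (Aop x)). eapply Rle_trans; [apply CS_rin_norm|].
    pose proof (BA y). pose proof (BA x). pose proof (hnorm_ge0 (Aop y)). pose proof (hnorm_ge0 (Aop x)).
    pose proof (hnorm_ge0 x). pose proof (hnorm_ge0 y).
    assert (hnorm (Aop y) * hnorm (Aop x) <= ((1 + t) * hnorm y) * hnorm (Aop x)) by (apply Rmult_le_compat_r; auto).
    assert (((1 + t) * hnorm y) * hnorm (Aop x) <= ((1 + t) * hnorm y) * ((1 + t) * hnorm x)) by (apply Rmult_le_compat_l; nra).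
    nra.
Qed.

Definition Bop (x : H) : H := proj1_sig (constructive_indefinite_description _ (Bex x)).

Lemma PB x y : hinner (Aop y) (Aop x) = hinner y (Bop x).
Proof. unfold Bop. exact (proj2_sig (constructive_indefinite_description _ (Bex x)) y). Qed.
Lemma PBr x y : rin y (Bop x) = rin (Aop y) (Aop x).
Proof. unfold rin. rewrite PB. reflexivity. Qed.
Lemma PBi x y : iin y (Bop x) = iin (Aop y) (Aop x).
Proof. unfold iin. rewrite PB. reflexivity. Qed.

Lemma LB : is_linear Bop.
Proof.
  split; intros.
  - apply eq_by_rin_r; intro z. rewrite rin_addr, !PBr, (lin_add _ LA), rin_addr. reflexivity.
  - apply eq_by_rin_r; intro z. rewrite rin_scalr, !PBr, PBi, (lin_scal _ LA), rin_scalr. reflexivity.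
Qed.

Lemma saB : sa Bop.
Proof.
  intros u v. rewrite (hinner_conj v (Bop u)), <- PB, <- hinner_conj, PB. reflexivity.
Qed.

Lemma rep_rin_move (rho : G -> H -> H) (Hr : unitary_rep rho) g u w :
  rin u (rho g w) = rin (rho (ginv g) u) w.
Proof.
  rewrite <- (unitary_rin _ (rep_unit rho Hr (ginv g)) u (rho g w)), rep_inv_l; auto.
Qed.

Lemma Bcomm g x : Bop (om g x) = om g (Bop x).
Proof.
  apply eq_by_rin_r; intro z.
  rewrite PBr, <- Aint, rep_rin_move by exact Hpi.
  rewrite Aint, <- PBr.
  rewrite <- (unitary_rin _ (rep_unit om Hom g)), rep_inv_r; [reflexivity|exact Hom].
Qed.

Definition Eop (x : H) : H := hsub (Bop x) x.

Lemma LE : is_linear Eop.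
Proof.
  unfold Eop; split; intros.
  - rewrite (lin_add _ LB). vec.
  - rewrite (lin_scal _ LB). vec.
Qed.

Lemma saE : sa Eop.
Proof.
  intros u v. unfold Eop. apply Cx_eq.
  - fold (rin (hsub (Bop u) u) v) (rin u (hsub (Bop v) v)). rewrite rin_subl, rin_subr.
    unfold rin. rewrite saB. ring.
  - fold (iin (hsub (Bop u) u) v) (iin u (hsub (Bop v) v)). rewrite iin_subl, iin_subr.
    unfold iin. rewrite saB. ring.
Qed.

Lemma Ecomm g : commute Eop (om g).
Proof.
  intros x. unfold Eop. rewrite Bcomm, (lin_sub _ (rep_lin om Hom g)). reflexivity.
Qed.

Definition e := 2 * t + t * t.

Lemma e_ge0 : 0 <= e.
Proof. unfold e. nra. Qed.
Lemma e_le : e <= 1/16.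
Proof. unfold e. nra. Qed.

Lemma BE : opb Eop e.
Proof.
  intros x. apply norm_le_by_rin.
  { pose proof e_ge0. pose proof (hnorm_ge0 x). nra. }
  intros y. rewrite rin_sym. unfold Eop. rewrite rin_subr, PBr. unfold Aop.
  rewrite !rin_subl, !rin_subr.
  pose proof (CS_rin_norm y (T x)). pose proof (CS_rin_norm (T y) x). pose proof (CS_rin_norm (T y) (T x)).
  pose proof (Rle_abs (rin (T y) (T x))).
  pose proof (Rle_abs (- rin y (T x))) as Q1. pose proof (Rle_abs (- rin (T y) x)) as Q2. rewrite Rabs_Ropp in Q1, Q2.
  pose proof (BT x) as H5. pose proof (BT y) as H6. pose proof (hnorm_ge0 x). pose proof (hnorm_ge0 y).
  pose proof (hnorm_ge0 (T x)). pose proof (hnorm_ge0 (T y)).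
  assert (A1 : hnorm y * hnorm (T x) <= t * (hnorm x * hnorm y)).
  { eapply Rle_trans; [apply Rmult_le_compat_l; [auto|apply H5]|]. right; ring. }
  assert (A2 : hnorm (T y) * hnorm x <= t * (hnorm x * hnorm y)).
  { eapply Rle_trans; [apply Rmult_le_compat_r; [auto|apply H6]|]. right; ring. }
  assert (A3 : hnorm (T y) * hnorm (T x) <= t * t * (hnorm x * hnorm y)).
  { eapply Rle_trans; [apply Rmult_le_compat; [auto|auto|apply H6|apply H5]|]. right; ring. }
  replace (e * hnorm x * hnorm y) with (2 * (t * (hnorm x * hnorm y)) + t * t * (hnorm x * hnorm y)) by (unfold e; ring).
  lra.
Qed.

Definition r := 2 * e.

Definition Fz (Z : H -> H) (x : H) : H :=
  hscal (Creal (- / 2)) (hadd (hadd (Eop x) (Z (Z x))) (hadd (hscal (Creal 2) (Z (Eop x))) (Z (Z (Eop x))))).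

Definition Good (Z : H -> H) :=
  is_linear Z /\ opb Z r /\ commute Z Eop /\ (forall g, commute Z (om g)) /\ sa Z.

Lemma Fz_commute (Z V : H -> H) : is_linear V -> is_linear Z ->
  (forall x, Z (V x) = V (Z x)) -> (forall x, Eop (V x) = V (Eop x)) -> commute (Fz Z) V.
Proof.
  intros LV LZ CZ CE x. unfold Fz.
  rewrite CE, !CZ.
  rewrite ?(lin_scal V LV), ?(lin_add V LV), ?(lin_scal V LV), ?(lin_add V LV). reflexivity.
Qed.

Lemma Fz_good (Z : H -> H) : Good Z -> Good (Fz Z).
Proof.
  intros [LZ [BZ [CZE [CZO SZ]]]].
  pose proof e_ge0 as e0. pose proof e_le as e1.
  assert (r0 : 0 <= r) by (unfold r; lra).
  split; [|split; [|split; [|split]]].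
  - unfold Fz. apply lin_rscal. apply lin_plus; apply lin_plus.
    + exact LE.
    + apply lin_comp; auto.
    + apply lin_rscal. apply lin_comp; auto. exact LE.
    + apply lin_comp; auto. apply lin_comp; auto. exact LE.
  - assert (Bs : opb (Fz Z) (Rabs (- / 2) * ((e + r * r) + (Rabs 2 * (r * e) + r * (r * e))))).
    { unfold Fz; apply opb_rscal; apply opb_plus; apply opb_plus.
      - exact BE.
      - exact (opb_comp' Z Z r r r0 BZ BZ).
      - apply opb_rscal. exact (opb_comp' Z Eop r e r0 BZ BE).
      - apply (opb_comp' Z (fun x => Z (Eop x)) r (r * e) r0 BZ). exact (opb_comp' Z Eop r e r0 BZ BE). }
    eapply opb_mono; [|exact Bs].
    rewrite (Rabs_pos_eq 2) by lra. rewrite Rabs_left by lra.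
    unfold r. nra.
  - apply Fz_commute; auto; try exact LE; intros; reflexivity.
  - intros g. apply Fz_commute; [apply (rep_lin om Hom)|auto|apply CZO|apply Ecomm].
  - unfold Fz. apply sa_rscal. apply sa_plus; apply sa_plus.
    + exact saE.
    + apply sa_comp; auto. intros x; reflexivity.
    + apply sa_rscal. apply sa_comp; auto. exact saE.
    + apply sa_comp; auto. apply sa_comp; auto. exact saE.
      intros x. rewrite CZE. reflexivity.
Qed.

Lemma Fz_contr (Z1 Z2 : H -> H) d : is_linear Z1 -> is_linear Z2 -> opb Z1 r -> opb Z2 r -> 0 <= d ->
  opd Z1 Z2 d -> opd (Fz Z1) (Fz Z2) ((r + e + r * e) * d).
Proof.
  intros L1 L2 B1 B2 d0 D x.
  pose proof e_ge0 as e0. pose proof e_le as e1.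
  assert (r0 : 0 <= r) by (unfold r; lra).
  assert (hsub (Fz Z1 x) (Fz Z2 x) = hscal (Creal (- / 2))
     (hadd (hadd (hsub (Z1 (Z1 x)) (Z2 (Z2 x))) (hscal (Creal 2) (hsub (Z1 (Eop x)) (Z2 (Eop x)))))
           (hsub (Z1 (Z1 (Eop x))) (Z2 (Z2 (Eop x)))))) by (unfold Fz; vec).
  rewrite H0, hnorm_scal_real, Rabs_left by lra.
  pose proof (opd_comp Z1 Z2 Z1 Z2 r r d d L1 r0 d0 B1 B2 D D x) as P1.
  pose proof (opd_comp Z1 Z2 Z1 Z2 r r d d L1 r0 d0 B1 B2 D D (Eop x)) as P2.
  pose proof (D (Eop x)) as P3. cbv beta in P1, P2, P3.
  pose proof (hnorm_triangle (hadd (hsub (Z1 (Z1 x)) (Z2 (Z2 x))) (hscal (Creal 2) (hsub (Z1 (Eop x)) (Z2 (Eop x)))))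
           (hsub (Z1 (Z1 (Eop x))) (Z2 (Z2 (Eop x))))).
  pose proof (hnorm_triangle (hsub (Z1 (Z1 x)) (Z2 (Z2 x))) (hscal (Creal 2) (hsub (Z1 (Eop x)) (Z2 (Eop x))))).
  rewrite hnorm_scal_real, Rabs_pos_eq in H2 by lra.
  pose proof (BE x). pose proof (hnorm_ge0 x). pose proof (hnorm_ge0 (Eop x)).
  assert (d * hnorm (Eop x) <= d * (e * hnorm x)) by (apply Rmult_le_compat_l; auto).
  assert ((r * d + d * r) * hnorm (Eop x) <= (r * d + d * r) * (e * hnorm x)) by (apply Rmult_le_compat_l; nra).
  nra.
Qed.

Fixpoint Zs (n : nat) : H -> H :=
  match n with
  | O => fun _ => hzero
  | S n => Fz (Zs n)
  end.

Lemma Zs_good n : Good (Zs n).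
Proof.
  induction n.
  - simpl. pose proof e_ge0. split; [|split; [|split; [|split]]].
    + split; intros; [rewrite hadd_0|rewrite hscal_zero]; reflexivity.
    + intros x. rewrite hnorm_zero. pose proof (hnorm_ge0 x). unfold r. nra.
    + intros x. symmetry. apply lin_zero, LE.
    + intros g x. symmetry. apply lin_zero, (rep_lin om Hom).
    + intros u v. rewrite hinner_0l, hinner_0r. reflexivity.
  - simpl. apply Fz_good; auto.
Qed.

Lemma Zs_step n : opd (Zs (S n)) (Zs n) (e / 2 * (1/4) ^ n).
Proof.
  pose proof e_ge0 as e0. pose proof e_le as e1.
  induction n.
  - intros x. simpl. unfold Fz.
    replace (hsub (hscal (Creal (- / 2)) (hadd (hadd (Eop x) hzero) (hadd (hscal (Creal 2) hzero) hzero))) hzero)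
      with (hscal (Creal (- / 2)) (Eop x)) by vec.
    rewrite hnorm_scal_real, Rabs_left by lra. pose proof (BE x). lra.
  - change (Zs (S (S n))) with (Fz (Zs (S n))). change (Zs (S n)) with (Fz (Zs n)) at 2.
    destruct (Zs_good (S n)) as [L1 [B1 _]]. destruct (Zs_good n) as [L2 [B2 _]].
    eapply opb_mono; [|apply Fz_contr; auto].
    + simpl. pose proof (pow_le (1/4) n ltac:(lra)).
      assert (0 <= e / 2 * (1/4)^n) by (apply Rmult_le_pos; lra).
      assert (r + e + r * e <= 1/4) by (unfold r; nra).
      set (a := e / 2 * (1/4)^n) in *.
      replace (e / 2 * (1 / 4 * (1 / 4) ^ n)) with (1/4 * a) by (unfold a; ring).
      apply Rmult_le_compat_r; auto.
    + pose proof (pow_le (1/4) n ltac:(lra)). apply Rmult_le_pos; lra.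
    + exact IHn.
Qed.

Lemma Zlim_ex x : exists l, forall n, hnorm (hsub (Zs n x) l) <= (2 * e / 3 * hnorm x) * (1/4) ^ n.
Proof.
  pose proof e_ge0 as e0.
  destruct (geom_limit (fun n => Zs n x) (e / 2 * hnorm x) (1/4)) as [l [_ Hl]].
  - pose proof (hnorm_ge0 x). nra.
  - lra.
  - intros n. pose proof (Zs_step n x). cbv beta in H0. lra.
  - exists l. intros n. eapply Rle_trans; [apply Hl|]. right. field.
Qed.

Definition Zlim (x : H) : H := proj1_sig (constructive_indefinite_description _ (Zlim_ex x)).

Lemma Zconv n : opd (Zs n) Zlim (2 * e / 3 * (1/4) ^ n).
Proof.
  intros x. pose proof (proj2_sig (constructive_indefinite_description _ (Zlim_ex x)) n). cbv beta.
  fold (Zlim x) in H0. eapply Rle_trans; [apply H0|]. right. ring.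
Qed.

Lemma Zgood : Good Zlim.
Proof.
  pose proof e_ge0 as e0.
  assert (K0 : 0 <= 2 * e / 3) by lra.
  assert (Lin : forall n, is_linear (Zs n)) by (intros n; apply (Zs_good n)).
  assert (LZ : is_linear Zlim) by (apply (lim_lin Zs Zlim _ K0 Zconv Lin)).
  split; [|split; [|split; [|split]]].
  - exact LZ.
  - apply (lim_opb Zs Zlim _ K0 Zconv). intros n; apply (Zs_good n).
  - apply (lim_commute Zs Zlim _ K0 Zconv Eop e LE e0 BE). intros n; apply (Zs_good n).
  - intros g. apply (lim_commute Zs Zlim _ K0 Zconv (om g) 1 (rep_lin om Hom g) ltac:(lra)).
    + intros x. rewrite rep_norm by exact Hom. lra.
    + intros n. apply (Zs_good n).
  - apply (lim_sa Zs Zlim _ K0 Zconv). intros n; apply (Zs_good n).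
Qed.

Lemma Zfix x : Zlim x = Fz Zlim x.
Proof.
  pose proof e_ge0 as e0. pose proof e_le as e1.
  destruct Zgood as [LZ [BZ _]].
  apply hsub_eq0. apply (vec_zero_geom _ ((2 * e / 3) * (1 + (r + e + r * e)) * hnorm x)).
  { pose proof (hnorm_ge0 x). unfold r. apply Rmult_le_pos; [|auto]. nra. }
  intros n.
  assert (hsub (Zlim x) (Fz Zlim x) = hadd (hopp (hsub (Zs (S n) x) (Zlim x))) (hsub (Fz (Zs n) x) (Fz Zlim x))).
  { change (Zs (S n) x) with (Fz (Zs n) x). vec. }
  rewrite H0. eapply Rle_trans; [apply hnorm_triangle|]. rewrite hnorm_opp.
  pose proof (Zconv (S n) x). cbv beta in H1.
  destruct (Zs_good n) as [Ln [Bn _]].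
  assert (0 <= 2 * e / 3 * (1 / 4) ^ n) by (pose proof (pow_le (1/4) n ltac:(lra)); nra).
  pose proof (Fz_contr (Zs n) Zlim _ Ln LZ Bn BZ H2 (Zconv n) x). cbv beta in H3.
  simpl in H1. pose proof (hnorm_ge0 x). pose proof (pow_le (1/4) n ltac:(lra)).
  assert (0 <= r + e + r * e) by (unfold r; nra).
  set (p := (1/4)^n) in *. set (nx := hnorm x) in *.
  assert (2 * e / 3 * (1 / 4 * p) * nx <= 2 * e / 3 * p * nx).
  { apply Rmult_le_compat_r; auto. nra. }
  set (c := r + e + r * e) in *. set (q := 2 * e / 3 * p * nx).
  assert (c * (2 * e / 3 * p) * nx = c * q) by (unfold q; ring).
  replace (2 * e / 3 * (1 + c) * nx * p) with (q + c * q) by (unfold q; ring).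
  unfold q in *. change (Zs (S n) x) with (Fz (Zs n) x). lra.
Qed.

Definition Yop (x : H) : H := hadd x (Zlim x).
Definition Wop (x : H) : H := Aop (Yop x).

Lemma B_as_E v : Bop v = hadd (Eop v) v.
Proof. unfold Eop. rewrite hsub_add. reflexivity. Qed.

Lemma YBY y : Yop (Bop (Yop y)) = y.
Proof.
  destruct Zgood as [LZ [_ [CZE _]]].
  pose proof (Zfix y) as FP. unfold Fz in FP.
  unfold Yop. rewrite B_as_E. rewrite !(lin_add _ LZ), (lin_add _ LE), (lin_add _ LZ).
  rewrite <- (CZE y), CZE, <- (CZE y).
  apply eq_by_rin; intro z. pose proof (f_equal (fun v => rin v z) FP) as F. cbv beta in F.
  repeat (rewrite ?rin_addl, ?rin_scall, ?iin_addl, ?iin_scall in F). simpl in F.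
  repeat rewrite rin_addl. lra.
Qed.

Lemma LW : is_linear Wop.
Proof.
  unfold Wop, Yop. apply lin_comp. exact LA. apply lin_plus. apply lin_id. apply Zgood.
Qed.

Lemma W_inner x y : hinner (Wop x) (Wop y) = hinner x y.
Proof.
  unfold Wop. rewrite PB.
  assert (saY : sa Yop) by (unfold Yop; apply sa_plus; [apply sa_id|apply Zgood]).
  rewrite saY, YBY. reflexivity.
Qed.

Lemma W_int g x : pi g (Wop x) = Wop (om g x).
Proof.
  unfold Wop. rewrite Aint. f_equal. unfold Yop.
  rewrite (lin_add _ (rep_lin om Hom g)). f_equal. destruct Zgood as [_ [_ [_ [C _]]]]. symmetry; apply C.
Qed.

Lemma W_close : opd Wop (fun x => x) (8 * t).
Proof.
  pose proof e_ge0 as e0. pose proof e_le as e1.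
  destruct Zgood as [LZ [BZ _]].
  intros x. cbv beta. unfold Wop, Aop.
  replace (hsub (hsub (Yop x) (T (Yop x))) x) with (hsub (Zlim x) (T (Yop x))) by (unfold Yop; vec).
  eapply Rle_trans; [apply hnorm_sub_le|].
  pose proof (BZ x). pose proof (BT (Yop x)). unfold Yop in H1 at 2.
  pose proof (hnorm_triangle x (Zlim x)). pose proof (hnorm_ge0 x).
  assert (t * hnorm (hadd x (Zlim x)) <= t * (hnorm x + r * hnorm x)) by (apply Rmult_le_compat_l; lra).
  assert (r <= 4 * t + 2 * t * t) by (unfold r, e; lra).
  assert (r * hnorm x <= (4 * t + 2 * t * t) * hnorm x) by (apply Rmult_le_compat_r; auto).
  fold (Yop x) in H1, H2, H4.
  assert (A1 : t * (r * hnorm x) <= t * ((4 * t + 2 * t * t) * hnorm x)) by (apply Rmult_le_compat_l; auto).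
  assert (A2 : (4 * t + 2 * t * t) * (t * hnorm x) <= 1 * (t * hnorm x)) by (apply Rmult_le_compat_r; nra).
  assert (A3 : 0 <= t * t * t * hnorm x) by (repeat apply Rmult_le_pos; auto).
  assert (A4 : t * (t * hnorm x) <= 1 * (t * hnorm x)) by (apply Rmult_le_compat_r; nra).
  lra.
Qed.

Theorem polar : exists W, is_unitary W /\ (forall g x, pi g (W x) = W (om g x)) /\ opd W (fun x => x) (8 * t).
Proof.
  exists Wop. split; [|split].
  - split; [exact LW|split; [exact W_inner|]].
    apply (isometry_surj Wop (8 * t) LW W_inner); [lra|exact W_close].
  - exact W_int.
  - exact W_close.
Qed.

End Polar.

Lemma parity (k : nat) : (exists m, k = (2 * m)%nat) \/ (exists m, k = (2 * m + 1)%nat).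
Proof. destruct (Nat.Even_or_Odd k) as [[m Hm]|[m Hm]]; [left|right]; exists m; lia. Qed.

Section K.
Context {H : HilbertSpace}.
Notation K := (@l2space H).

Lemma K_sq_add (u v : K) k : sq (hadd u v) k = hadd (sq u k) (sq v k).
Proof. reflexivity. Qed.
Lemma K_sq_scal a (u : K) k : sq (hscal a u) k = hscal a (sq u k).
Proof. reflexivity. Qed.
Lemma K_sq_opp (u : K) k : sq (hopp u) k = hopp (sq u k).
Proof. reflexivity. Qed.
Lemma K_sq_sub (u v : K) k : sq (hsub u v) k = hsub (sq u k) (sq v k).
Proof. reflexivity. Qed.
Lemma K_sq_zero k : sq (@hzero K) k = hzero.
Proof. reflexivity. Qed.

Lemma K_eq (u v : K) : (forall k, sq u k = sq v k) -> u = v.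
Proof. apply l2_eq. Qed.

Lemma K_nsq (u : K) : nsq u = Series (fun k => nsq (sq u k)).
Proof. reflexivity. Qed.

Lemma K_coord_norm (u : K) k : hnorm (sq u k) <= hnorm u.
Proof.
  unfold hnorm at 2. fold (nsq u). rewrite K_nsq. unfold hnorm. apply sqrt_le_1_alt.
  apply (coord_le u k).
Qed.

Definition sseq (i : nat) (y : H) (k : nat) : H := if Nat.eq_dec k i then y else hzero.

Lemma sseq_sum i y N : sum_f_R0 (fun k => nsq (sseq i y k)) N <= nsq y.
Proof.
  assert (forall N, sum_f_R0 (fun k => nsq (sseq i y k)) N = if le_dec i N then nsq y else 0).
  { intros M. induction M.
    - simpl. unfold sseq. destruct (Nat.eq_dec 0 i), (le_dec i 0); try lia; subst; auto. rewrite nsq_zero; auto.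
    - simpl. rewrite IHM. unfold sseq. destruct (Nat.eq_dec (S M) i), (le_dec i M), (le_dec i (S M)); try lia;
        rewrite ?nsq_zero; lra. }
  rewrite H0. destruct (le_dec i N); [lra|apply nsq_ge0].
Qed.

Lemma sseq_pred i y : l2pred (sseq i y).
Proof. apply (proj1 (ser_bound _ (nsq y) (fun k => nsq_ge0 _) (sseq_sum i y))). Qed.

Definition single (i : nat) (y : H) : K := exist _ (sseq i y) (sseq_pred i y).

Lemma single_nsq i y : nsq (single i y) <= nsq y.
Proof. rewrite K_nsq. apply (proj2 (ser_bound _ (nsq y) (fun k => nsq_ge0 _) (sseq_sum i y))). Qed.

Lemma single_norm i y : hnorm (single i y) <= hnorm y.
Proof. unfold hnorm. apply sqrt_le_1_alt. apply single_nsq. Qed.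

Lemma single_at i y : sq (single i y) i = y.
Proof. simpl. unfold sseq. destruct (Nat.eq_dec i i); [reflexivity|lia]. Qed.
Lemma single_off i y k : k <> i -> sq (single i y) k = hzero.
Proof. intros Hk. simpl. unfold sseq. destruct (Nat.eq_dec k i); [lia|reflexivity]. Qed.

Lemma single_add i x y : single i (hadd x y) = hadd (single i x) (single i y).
Proof. apply K_eq; intros k; simpl; unfold sseq; destruct (Nat.eq_dec k i); auto. rewrite hadd_0; reflexivity. Qed.
Lemma single_scal i a x : single i (hscal a x) = hscal a (single i x).
Proof. apply K_eq; intros k; simpl; unfold sseq; destruct (Nat.eq_dec k i); auto. rewrite hscal_zero; reflexivity. Qed.

End K.

Lemma ev2 m : Nat.even (2 * m) = true.
Proof. apply Nat.even_even. Qed.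
Lemma ev2S m : Nat.even (S (2 * m)) = false.
Proof. replace (S (2 * m)) with (2 * m + 1)%nat by lia. apply Nat.even_odd. Qed.
Lemma dv2 m : Nat.div2 (2 * m) = m.
Proof. apply Nat.div2_double. Qed.
Lemma dv2S m : Nat.div2 (S (2 * m)) = m.
Proof. apply Nat.div2_succ_double. Qed.

Section Deriv.
Context {G : Group} {H : HilbertSpace}.
Notation K := (@l2space H).
Variables (pi : G -> H -> H) (Hpi : unitary_rep pi).
Variables (om : nat -> G -> H -> H) (Hom : forall n, unitary_rep (om n)) (c : nat -> R).
Hypothesis Hc : forall n, 0 < c n.

Definition Dd n g y := hscal (Creal (c n)) (hsub (pi g y) (om n g y)).
Hypothesis HD : forall n g x, hnorm (Dd n g x) <= hnorm x.

Lemma Dd_lin n g : is_linear (Dd n g).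
Proof.
  pose proof (rep_lin pi Hpi g) as L1. pose proof (rep_lin (om n) (Hom n) g) as L2.
  unfold Dd; split; intros.
  - rewrite (lin_add _ L1), (lin_add _ L2). vec.
  - rewrite (lin_scal _ L1), (lin_scal _ L2). vec.
Qed.

Lemma Dd_cocycle n g h y : Dd n (gmul g h) y = hadd (pi g (Dd n h y)) (Dd n g (om n h y)).
Proof.
  destruct Hpi as [[Hm1 _] _]. destruct (Hom n) as [[Hm2 _] _].
  unfold Dd. rewrite Hm1, Hm2, (lin_scal _ (rep_lin pi Hpi g)), (lin_sub _ (rep_lin pi Hpi g)). vec.
Qed.

Lemma Dd_one n y : Dd n gone y = hzero.
Proof.
  destruct Hpi as [[_ H1] _]. destruct (Hom n) as [[_ H2] _].
  unfold Dd. rewrite H1, H2, hsub_diag, hscal_zero. reflexivity.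
Qed.

Definition rseq (g : G) (u : nat -> H) (k : nat) : H :=
  if Nat.even k then hadd (pi g (u k)) (Dd (Nat.div2 k) g (u (S k))) else om (Nat.div2 k) g (u k).

Lemma nsq_le_of_norm (a b : H) : hnorm a <= hnorm b -> nsq a <= nsq b.
Proof. intros Hab. rewrite <- (hnorm_sq b). apply hnorm_le_iff; auto. apply hnorm_ge0. Qed.

Lemma rseq_bound g u k : nsq (rseq g u k) <= 2 * nsq (u k) + 2 * nsq (u (S k)).
Proof.
  unfold rseq. destruct (Nat.even k).
  - eapply Rle_trans; [apply nsq_add_le|].
    rewrite (unitary_nsq _ (rep_unit pi Hpi g)). pose proof (nsq_le_of_norm _ _ (HD (Nat.div2 k) g (u (S k)))). lra.
  - rewrite (unitary_nsq _ (rep_unit (om _) (Hom _) g)). pose proof (nsq_ge0 (u k)). pose proof (nsq_ge0 (u (S k))). lra.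
Qed.

Lemma rseq_pred g (u : K) : l2pred (rseq g (sq u)).
Proof.
  unfold l2pred. apply (exs_le_abs _ (fun k => 2 * nsq (sq u k) + 2 * nsq (sq u (S k)))).
  - intros k. rewrite Rabs_pos_eq by apply nsq_ge0. apply rseq_bound.
  - apply exs_plus; apply exs_scal; [apply ex_nsq|]. apply (exs_shift (fun k => nsq (sq u k))). apply ex_nsq.
Qed.

Definition rhoK (g : G) (u : K) : K := exist _ (rseq g (sq u)) (rseq_pred g u).

Lemma rhoK_nsq g (u : K) : nsq (rhoK g u) <= 4 * nsq u.
Proof.
  rewrite !K_nsq. simpl.
  assert (E1 : ex_series (fun k => nsq (sq u k))) by apply ex_nsq.
  assert (E2 : ex_series (fun k => nsq (sq u (S k)))) by (apply (exs_shift (fun k => nsq (sq u k))); auto).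
  eapply Rle_trans; [apply (Series_le _ (fun k => 2 * nsq (sq u k) + 2 * nsq (sq u (S k))))|].
  - intros k. split; [apply nsq_ge0|apply rseq_bound].
  - apply exs_plus; apply exs_scal; auto.
  - rewrite Series_plus by (apply exs_scal; auto). rewrite !Series_scal_l.
    pose proof (ser_shift_le (fun k => nsq (sq u k)) (fun k => nsq_ge0 _) E1). simpl in H0. lra.
Qed.

Lemma rhoK_norm g (u : K) : hnorm (rhoK g u) <= 2 * hnorm u.
Proof. apply hnorm_le_iff; [pose proof (hnorm_ge0 u); lra|]. pose proof (rhoK_nsq g u). rewrite <- (hnorm_sq u) in H0. lra. Qed.

Lemma rhoK_lin g : is_linear (rhoK g).
Proof.
  split; intros; apply K_eq; intros k; simpl; unfold rseq, sq; simpl; destruct (Nat.even k).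
  - rewrite (lin_add _ (rep_lin pi Hpi g)), (lin_add _ (Dd_lin _ g)). vec.
  - apply (lin_add _ (rep_lin (om _) (Hom _) g)).
  - rewrite (lin_scal _ (rep_lin pi Hpi g)), (lin_scal _ (Dd_lin _ g)), hscal_addv. reflexivity.
  - apply (lin_scal _ (rep_lin (om _) (Hom _) g)).
Qed.

Lemma rhoK_hom : is_hom rhoK.
Proof.
  split.
  - intros g h u. apply K_eq; intros k. unfold rhoK, rseq, sq; cbn [proj1_sig].
    destruct (parity k) as [[m ->]|[m ->]].
    + rewrite !ev2, ev2S, !dv2, dv2S. destruct Hpi as [[Hm1 _] _].
      rewrite Hm1, Dd_cocycle, (lin_add _ (rep_lin pi Hpi g)). vec.
    + replace (2 * m + 1)%nat with (S (2 * m)) by lia. rewrite ev2S, dv2S.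
      destruct (Hom m) as [[Hm2 _] _]. apply Hm2.
  - intros u. apply K_eq; intros k. unfold rhoK, rseq, sq; cbn [proj1_sig].
    destruct (parity k) as [[m ->]|[m ->]].
    + rewrite ev2, dv2, Dd_one. destruct Hpi as [[_ H1] _]. rewrite H1, hadd_0. reflexivity.
    + replace (2 * m + 1)%nat with (S (2 * m)) by lia. rewrite ev2S, dv2S.
      destruct (Hom m) as [[_ H2] _]. apply H2.
Qed.

Lemma rhoK_ub : unif_bounded_rep rhoK.
Proof.
  split; [exact rhoK_hom|split; [exact rhoK_lin|]]. exists 2. intros g u. apply rhoK_norm.
Qed.

End Deriv.

Section Split.
Context {G : Group} {H : HilbertSpace}.
Notation K := (@l2space H).
Variables (pi : G -> H -> H) (Hpi : unitary_rep pi).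
Variables (om : nat -> G -> H -> H) (Hom : forall n, unitary_rep (om n)) (c : nat -> R).
Hypothesis Hc : forall n, 0 < c n.
Hypothesis HD : forall n g x, hnorm (Dd pi om c n g x) <= hnorm x.
Notation rho := (rhoK pi Hpi om Hom c HD).

Variables (S Sinv : K -> K) (aS aI : R).
Hypotheses (LS : is_linear S) (LI : is_linear Sinv) (aS0 : 0 <= aS) (aI0 : 0 <= aI)
  (BS : opb S aS) (BI : opb Sinv aI)
  (SSi : forall x, S (Sinv x) = x) (SiS : forall x, Sinv (S x) = x)
  (Hsig : forall g, is_unitary (fun x => Sinv (rho g (S x)))).

Definition Mset (v : K) := forall k, Nat.even k = false -> sq v k = hzero.
Definition Lset (z : K) := Mset (S z).

Lemma L_sub : hsubspace Lset.
Proof.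
  split; [|split]; unfold Lset, Mset.
  - intros k _. rewrite (lin_zero S LS). reflexivity.
  - intros x y Hx Hy k Hk. rewrite (lin_add S LS), K_sq_add, Hx, Hy by auto. apply hadd_0.
  - intros a x Hx k Hk. rewrite (lin_scal S LS), K_sq_scal, Hx by auto. apply hscal_zero.
Qed.

Lemma L_closed : hclosed Lset.
Proof.
  intros u l Hu Hl k Hk. apply hnorm_le0. apply le_eps. intros eps He.
  destruct (Hl (eps / (aS + 1))) as [N HN]; [apply Rdiv_lt_0_compat; lra|].
  specialize (HN N (le_n _)).
  pose proof (K_coord_norm (hsub (S l) (S (u N))) k) as P.
  rewrite K_sq_sub, (Hu N k Hk), hsub_0r in P.
  rewrite <- (lin_sub S LS) in P. pose proof (BS (hsub l (u N))). rewrite hnorm_sub_sym in HN.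
  pose proof (hnorm_ge0 (hsub l (u N))).
  apply (Rmult_lt_compat_l (aS + 1)) in HN; [|lra].
  replace ((aS + 1) * (eps / (aS + 1))) with eps in HN by (field; lra). nra.
Qed.

Definition sig (g : G) (z : K) : K := Sinv (rho g (S z)).

Lemma sig_rep : unitary_rep sig.
Proof.
  split; [|exact Hsig]. split.
  - intros g h x. unfold sig. rewrite SSi. f_equal. destruct (rhoK_hom pi Hpi om Hom c HD) as [Hm _]. apply Hm.
  - intros x. unfold sig. destruct (rhoK_hom pi Hpi om Hom c HD) as [_ H1]. rewrite H1. apply SiS.
Qed.

Lemma rho_M g v : Mset v -> Mset (rho g v).
Proof.
  intros Hv k Hk. unfold rhoK, sq; cbn [proj1_sig]. unfold rseq. rewrite Hk.
  fold (sq v k). rewrite (Hv k Hk). apply lin_zero. apply (rep_lin (om _) (Hom _)).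
Qed.

Notation pr := (pr Lset L_sub L_closed).

Lemma sig_L g z : Lset z -> Lset (sig g z).
Proof. intros Hz. unfold Lset, sig. rewrite SSi. apply rho_M. exact Hz. Qed.

Lemma pr_sig g z : pr (sig g z) = sig g (pr z).
Proof.
  apply pr_char.
  - apply sig_L, pr_in.
  - intros m Hm. rewrite <- (lin_sub _ (rep_lin sig sig_rep g)), rep_adj by exact sig_rep.
    apply (pr_orth Lset L_sub L_closed z). apply sig_L. exact Hm.
Qed.

Definition Pp (z : K) : K := S (hsub (Sinv z) (pr (Sinv z))).

Lemma Pp_lin : is_linear Pp.
Proof.
  pose proof (pr_lin Lset L_sub L_closed) as LP.
  unfold Pp; split; intros.
  - rewrite (lin_add _ LI), (lin_add _ LP), <- (lin_add _ LS). f_equal. vec.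
  - rewrite (lin_scal _ LI), (lin_scal _ LP), <- (lin_scal _ LS). f_equal. vec.
Qed.

Lemma Pp_comm g z : Pp (rho g z) = rho g (Pp z).
Proof.
  unfold Pp.
  assert (E : Sinv (rho g z) = sig g (Sinv z)) by (unfold sig; rewrite SSi; reflexivity).
  rewrite E, pr_sig, <- (lin_sub _ (rep_lin sig sig_rep g)). unfold sig at 1. rewrite SSi. reflexivity.
Qed.

Lemma Pp_M f : Mset f -> Pp f = hzero.
Proof.
  intros Hf. unfold Pp. rewrite (pr_of_L Lset L_sub L_closed).
  - rewrite hsub_diag. apply (lin_zero S LS).
  - unfold Lset. rewrite SSi. exact Hf.
Qed.

Lemma Pp_compl z : Mset (hsub z (Pp z)).
Proof.
  unfold Pp. rewrite (lin_sub S LS), SSi.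
  replace (hsub z (hsub z (S (pr (Sinv z))))) with (S (pr (Sinv z))) by vec.
  apply (pr_in Lset L_sub L_closed).
Qed.

Lemma Pp_bound : opb Pp (aS * aI).
Proof.
  intros z. unfold Pp. eapply Rle_trans; [apply BS|].
  pose proof (pr_compl_norm Lset L_sub L_closed (Sinv z)). pose proof (BI z).
  rewrite Rmult_assoc. apply Rmult_le_compat_l; auto. lra.
Qed.

(* the derivation is inner *)
Definition ww (n : nat) (y : H) : H := sq (Pp (single (2 * n + 1) y)) (2 * n).

Lemma rho_single n g y :
  rho g (single (2 * n + 1) y) = hadd (single (2 * n + 1) (om n g y)) (single (2 * n) (Dd pi om c n g y)).
Proof.
  apply K_eq; intros k. rewrite K_sq_add.
  change (sq (rho g (single (2 * n + 1) y)) k) with (rseq pi om c g (sq (single (2 * n + 1) y)) k).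
  unfold rseq. destruct (parity k) as [[m ->]|[m ->]].
  - rewrite ev2, dv2. rewrite !(single_off (2 * n + 1) _ (2 * m)%nat) by lia.
    rewrite (lin_zero _ (rep_lin pi Hpi g)), !hadd_0l.
    destruct (Nat.eq_dec m n) as [->|Hmn].
    + replace (Datatypes.S (2 * n)) with (2 * n + 1)%nat by lia. rewrite !single_at. reflexivity.
    + rewrite (single_off _ _ (Datatypes.S (2 * m))) by lia. rewrite (single_off (2 * n) _ (2 * m)%nat) by lia.
      apply (lin_zero _ (Dd_lin pi Hpi om Hom c m g)).
  - replace (2 * m + 1)%nat with (Datatypes.S (2 * m)) by lia. rewrite ev2S, dv2S.
    rewrite (single_off (2 * n) _ (Datatypes.S (2 * m))) by lia. rewrite hadd_0.
    destruct (Nat.eq_dec m n) as [->|Hmn].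
    + replace (Datatypes.S (2 * n)) with (2 * n + 1)%nat by lia. rewrite !single_at. reflexivity.
    + rewrite !(single_off _ _ (Datatypes.S (2 * m))) by lia. apply (lin_zero _ (rep_lin (om m) (Hom m) g)).
Qed.

Lemma ww_eq n g y : ww n (om n g y) = hadd (pi g (ww n y)) (Dd pi om c n g y).
Proof.
  unfold ww.
  pose proof (Pp_comm g (single (2 * n + 1) y)) as E.
  rewrite rho_single, (lin_add _ Pp_lin), (Pp_M (single (2 * n) _)), hadd_0 in E.
  2: { intros k Hk. apply single_off. intros ->. rewrite ev2 in Hk. discriminate. }
  rewrite E. unfold rhoK, sq at 1; cbn [proj1_sig]. unfold rseq. rewrite ev2, dv2.
  f_equal. f_equal.
  pose proof (Pp_compl (single (2 * n + 1) y) (Datatypes.S (2 * n)) (ev2S n)) as C.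
  rewrite K_sq_sub in C. replace (Datatypes.S (2 * n)) with (2 * n + 1)%nat in C by lia.
  rewrite single_at in C. apply hsub_eq0 in C. replace (Datatypes.S (2 * n)) with (2 * n + 1)%nat by lia.
  symmetry. exact C.
Qed.

Lemma ww_lin n : is_linear (ww n).
Proof.
  unfold ww; split; intros.
  - rewrite single_add, (lin_add _ Pp_lin). reflexivity.
  - rewrite single_scal, (lin_scal _ Pp_lin). reflexivity.
Qed.

Lemma ww_bound n : opb (ww n) (aS * aI).
Proof.
  intros y. unfold ww. eapply Rle_trans; [apply K_coord_norm|]. eapply Rle_trans; [apply Pp_bound|].
  apply Rmult_le_compat_l; [apply Rmult_le_pos; auto|]. apply single_norm.
Qed.

Definition Tn (n : nat) (y : H) : H := hscal (Creal (- / c n)) (ww n y).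

Lemma Tn_props n : is_linear (Tn n) /\ opb (Tn n) (aS * aI / c n) /\
  forall g y, hsub (pi g y) (om n g y) = hsub (pi g (Tn n y)) (Tn n (om n g y)).
Proof.
  pose proof (Hc n) as cn.
  split; [|split].
  - unfold Tn. apply lin_rscal, ww_lin.
  - intros y. unfold Tn. rewrite hnorm_scal_real. rewrite Rabs_left by (apply Ropp_lt_gt_0_contravar, Rinv_0_lt_compat; lra).
    rewrite Ropp_involutive. pose proof (ww_bound n y).
    apply (Rmult_le_compat_l (/ c n)) in H0; [|apply Rlt_le, Rinv_0_lt_compat; lra].
    eapply Rle_trans; [exact H0|]. right. unfold Rdiv. ring.
  - intros g y. unfold Tn. rewrite ww_eq, (lin_scal _ (rep_lin pi Hpi g)). unfold Dd.
    apply eq_by_rin; intro z.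
    repeat (rewrite ?rin_addl, ?rin_subl, ?rin_scall, ?rin_oppl, ?rin_0l,
                  ?iin_addl, ?iin_subl, ?iin_scall, ?iin_oppl, ?iin_0l). simpl. field. lra.
Qed.

End Split.

Theorem deriv_bound {G : Group} {H : HilbertSpace} (pi : G -> H -> H) (Hpi : unitary_rep pi)
  (HG : unitarisable G) (om : nat -> G -> H -> H) (Hom : forall n, unitary_rep (om n)) (c : nat -> R)
  (Hc : forall n, 0 < c n) (HD : forall n g x, hnorm (Dd pi om c n g x) <= hnorm x) :
  exists C, 0 <= C /\ forall n, exists T, is_linear T /\ opb T (C / c n) /\
    forall g y, hsub (pi g y) (om n g y) = hsub (pi g (T y)) (T (om n g y)).
Proof.
  destruct (HG _ _ (rhoK_ub pi Hpi om Hom c HD)) as [S [Sinv [[LS [aS BS]] [[LI [aI BI]] [SSi [SiS Hsig]]]]]].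
  set (aS' := Rmax aS 0). set (aI' := Rmax aI 0).
  assert (BS' : opb S aS').
  { intros x. eapply Rle_trans; [apply BS|]. apply Rmult_le_compat_r; [apply hnorm_ge0|apply Rmax_l]. }
  assert (BI' : opb Sinv aI').
  { intros x. eapply Rle_trans; [apply BI|]. apply Rmult_le_compat_r; [apply hnorm_ge0|apply Rmax_l]. }
  exists (aS' * aI'). split; [apply Rmult_le_pos; apply Rmax_r|].
  intros n. eexists.
  apply (Tn_props pi Hpi om Hom c Hc HD S Sinv aS' aI' LS LI (Rmax_r _ _) (Rmax_r _ _) BS' BI' SSi SiS Hsig n).
Qed.

Section Final.
Context {G : Group} {H : HilbertSpace}.

Lemma unitary_inv (U U' : H -> H) : unitary_pair U U' -> is_unitary U'.
Proof.
  intros [HU [E1 E2]]. pose proof (unitary_inj U HU) as Inj. split; [|split].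
  - split; intros; apply Inj; rewrite E1.
    + rewrite (lin_add U (unitary_lin U HU)), !E1. reflexivity.
    + rewrite (lin_scal U (unitary_lin U HU)), E1. reflexivity.
  - intros x y. destruct HU as [_ [Hi _]]. rewrite <- Hi, !E1. reflexivity.
  - intros y. exists (U y). apply E2.
Qed.

Lemma unitary_comp (U V : H -> H) : is_unitary U -> is_unitary V -> is_unitary (fun x => U (V x)).
Proof.
  intros HU HV. split; [|split].
  - apply lin_comp; apply unitary_lin; auto.
  - intros x y. destruct HU as [_ [Hu _]]. destruct HV as [_ [Hv _]]. rewrite Hu, Hv. reflexivity.
  - intros y. destruct HU as [_ [_ Su]]. destruct HV as [_ [_ Sv]].
    destruct (Su y) as [z Hz]. destruct (Sv z) as [x Hx]. exists x. rewrite Hx. exact Hz.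
Qed.

Variables (pi : G -> H -> H) (Hpi : unitary_rep pi) (HG : unitarisable G).

Lemma L1 (eps : R) : eps > 0 -> exists delta, delta > 0 /\
  forall om, unitary_rep om -> repdist_le pi om delta ->
    exists T, is_linear T /\ opb T eps /\ forall g y, hsub (pi g y) (om g y) = hsub (pi g (T y)) (T (om g y)).
Proof.
  intros He. apply NNPP. intros Hn.
  assert (Hn' : forall n : nat, exists om : G -> H -> H, unitary_rep om /\
      repdist_le pi om (/ ((INR n + 1) * (INR n + 1))) /\
      ~ (exists T, is_linear T /\ opb T eps /\ forall g y, hsub (pi g y) (om g y) = hsub (pi g (T y)) (T (om g y)))).
  { intros n. apply NNPP. intros Hc. apply Hn. exists (/ ((INR n + 1) * (INR n + 1))). split.
    { apply Rinv_0_lt_compat. pose proof (pos_INR n). nra. }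
    intros om Hom Hd. apply NNPP. intros Hno. apply Hc. exists om. auto. }
  destruct (choice_nat _ Hn') as [oms Homs].
  set (c := fun n : nat => INR n + 1).
  assert (Hc : forall n, 0 < c n) by (intros n; unfold c; pose proof (pos_INR n); lra).
  assert (Hom : forall n, unitary_rep (oms n)) by (intros n; apply Homs).
  assert (HD : forall n g x, hnorm (Dd pi oms c n g x) <= hnorm x).
  { intros n g x. unfold Dd. rewrite hnorm_scal_real, Rabs_pos_eq by (apply Rlt_le, Hc).
    destruct (Homs n) as [_ [Hd _]]. specialize (Hd g x). unfold c in *.
    pose proof (pos_INR n). pose proof (hnorm_ge0 x).
    apply (Rmult_le_compat_l (INR n + 1)) in Hd; [|lra].
    eapply Rle_trans; [exact Hd|].
    replace ((INR n + 1) * (/ ((INR n + 1) * (INR n + 1)) * hnorm x)) with (/ (INR n + 1) * hnorm x) by (field; lra).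
    rewrite <- (Rmult_1_l (hnorm x)) at 2. apply Rmult_le_compat_r; auto.
    rewrite <- Rinv_1. apply Rinv_le_contravar; lra. }
  destruct (deriv_bound pi Hpi HG oms Hom c Hc HD) as [C [C0 HC]].
  destruct (nat_large (eps / (C + 1))) as [N HN]; [apply Rdiv_lt_0_compat; lra|].
  specialize (HN N (le_n _)).
  destruct (HC N) as [T [LT [BT RT]]].
  destruct (Homs N) as [_ [_ Hno]]. apply Hno. exists T. split; [auto|split; [|auto]].
  eapply opb_mono; [|exact BT]. unfold c. unfold Rdiv.
  pose proof (pos_INR N).
  assert (/ (INR N + 1) * (C + 1) < eps).
  { apply (Rmult_lt_compat_r (C + 1)) in HN; [|lra]. unfold Rdiv in HN.
    rewrite Rmult_assoc, Rinv_l, Rmult_1_r in HN by lra. exact HN. }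
  assert (0 < / (INR N + 1)) by (apply Rinv_0_lt_compat; lra). nra.
Qed.

Lemma Lq (eps : R) : eps > 0 -> exists delta, delta > 0 /\
  forall om, unitary_rep om -> repdist_le pi om delta ->
    exists W W', unitary_pair W W' /\ (forall g x, om g (W x) = W (pi g x)) /\
      forall x, hnorm (hsub (W x) x) <= eps * hnorm x.
Proof.
  intros He. set (t := Rmin (1/64) (eps / 8)).
  assert (t0 : 0 < t) by (unfold t; apply Rmin_glb_lt; lra).
  assert (t1 : t <= 1/64) by apply Rmin_l. assert (t2 : t <= eps / 8) by apply Rmin_r.
  destruct (L1 t t0) as [delta [Hd HL]]. exists delta. split; auto.
  intros om Hom Hrd. destruct (HL om Hom Hrd) as [T [LT [BT RT]]].
  destruct (polar pi om Hpi Hom t T ltac:(lra) t1 LT BT RT) as [W0 [UW0 [IW0 CW0]]].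
  destruct UW0 as [LW0 [NW0 SW0]].
  assert (UW0 : is_unitary W0) by (split; auto).
  pose proof (unitary_inj W0 UW0) as Inj.
  set (Wi := fun y => proj1_sig (constructive_indefinite_description _ (SW0 y))).
  assert (E1 : forall y, W0 (Wi y) = y) by (intros y; exact (proj2_sig (constructive_indefinite_description _ (SW0 y)))).
  assert (E2 : forall x, Wi (W0 x) = x) by (intros x; apply Inj; apply E1).
  assert (Pair : unitary_pair Wi W0).
  { split; [|split; auto]. apply (unitary_inv W0 Wi). split; auto. }
  exists Wi, W0. split; [exact Pair|split].
  - intros g x. apply Inj. rewrite <- IW0, !E1. reflexivity.
  - intros x. rewrite <- (unitary_norm W0 UW0), (lin_sub W0 LW0), E1, hnorm_sub_sym.
    pose proof (CW0 x). cbv beta in H0. eapply Rle_trans; [exact H0|].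
    apply Rmult_le_compat_r; [apply hnorm_ge0|lra].
Qed.

Theorem main_strongly_rigid : strongly_rigid pi.
Proof.
  split.
  - destruct (Lq 1 ltac:(lra)) as [delta [Hd HL]]. exists delta. split; auto.
    intros om Hom Hrd. destruct (HL om Hom Hrd) as [W [W' [[UW _] [IW _]]]].
    exists W. split; auto.
  - split.
    + intros U U' HUU eps He. exists (eps / 2). split; [lra|].
      intros V V' HVV Hd g x. unfold conj_rep.
      destruct HUU as [UU [EU1 EU2]]. destruct HVV as [UV [EV1 EV2]].
      pose proof (unitary_inv V V' (conj UV (conj EV1 EV2))) as UV'.
      assert (N1 : hnorm (V' x) = hnorm x) by (rewrite <- (unitary_norm V UV), EV1; reflexivity).
      assert (D1 : hnorm (hsub (V (pi g (V' x))) (U (pi g (V' x)))) <= eps / 2 * hnorm x).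
      { eapply Rle_trans; [apply Hd|]. rewrite (rep_norm pi Hpi), N1. lra. }
      assert (D2 : hnorm (hsub (U (pi g (V' x))) (U (pi g (U' x)))) <= eps / 2 * hnorm x).
      { rewrite <- (lin_sub U (unitary_lin U UU)), (unitary_norm U UU), <- (lin_sub _ (rep_lin pi Hpi g)),
          (rep_norm pi Hpi), <- (unitary_norm U UU), (lin_sub U (unitary_lin U UU)), EU1.
        rewrite <- (EV1 x) at 2. rewrite hnorm_sub_sym. eapply Rle_trans; [apply Hd|]. rewrite N1. lra. }
      eapply Rle_trans; [apply (hnorm_sub_triangle _ (U (pi g (V' x))))|]. lra.
    + intros U U' HUU eps He. destruct (Lq eps He) as [delta [Hd HL]]. exists delta. split; auto.
      intros V V' HVV Hrd.
      destruct HUU as [UU [EU1 EU2]]. destruct HVV as [UV [EV1 EV2]].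
      pose proof (unitary_inv U U' (conj UU (conj EU1 EU2))) as UU'.
      pose proof (unitary_inv V V' (conj UV (conj EV1 EV2))) as UV'.
      set (om := fun g x => U' (V (pi g (V' (U x))))).
      assert (Hom : unitary_rep om).
      { split; [split|].
        - intros g h x. unfold om. rewrite EU1, EV2. destruct Hpi as [[Hm _] _]. rewrite Hm. reflexivity.
        - intros x. unfold om. destruct Hpi as [[_ H1] _]. rewrite H1, EV1, EU2. reflexivity.
        - intros g. unfold om. apply unitary_comp; auto. apply unitary_comp; auto. apply unitary_comp.
          + apply (rep_unit pi Hpi).
          + apply unitary_comp; auto. }
      assert (Hrd' : repdist_le pi om delta).
      { intros g x. unfold om. rewrite <- (unitary_norm U UU), (lin_sub U (unitary_lin U UU)), EU1.
        pose proof (Hrd g (U x)). unfold conj_rep in H0. rewrite EU2 in H0.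
        rewrite hnorm_sub_sym, (unitary_norm U UU) in H0. exact H0. }
      destruct (HL om Hom Hrd') as [W0 [W0' [[UW0 [EW1 EW2]] [IW0 CW0]]]].
      exists (fun x => U (W0 x)), (fun x => W0' (U' x)). split; [|split].
      * split; [apply unitary_comp; auto|split; intros x].
        -- rewrite EW1, EU1. reflexivity.
        -- rewrite EU2, EW2. reflexivity.
      * intros x. rewrite <- (lin_sub U (unitary_lin U UU)), (unitary_norm U UU). apply CW0.
      * intros g x. unfold conj_rep. rewrite <- IW0, EW1. unfold om. rewrite EU1, EU1. reflexivity.
Qed.

End Final.

Theorem theorem3p3 (G : Group) (HG : unitarisable G)
  (H : HilbertSpace) (pi : G -> H -> H) (Hpi : unitary_rep pi) :
  strongly_rigid pi.
Proof. exact (main_strongly_rigid pi Hpi HG). Qed.
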